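(* Let $p>0$, $k>0$ and $q=p\,e^{-2k^2}$ with $0<pq<1$, let $\zeta\in\mathbb R$, $t\in\mathbb C$, $x\in\mathbb R$. (a) If $p\,e^{-2\zeta k^2}<1$, then $$E^{(\zeta+1/2)}_{p,q}\big(te^{-kx}\big)e^{-x^2/2}=\frac1{\sqrt{2\pi}}\int_{-\infty}^{\infty}e^{ixy-y^2/2}E^{(\zeta)}_{p,q}\big(te^{iky}\big)\,dy.$$ (b) If $p\,e^{-(2\zeta-1)k^2}<1$, then $$E^{(\zeta-1/2)}_{p,q}\big(te^{ikx}\big)e^{-x^2/2}=\frac1{\sqrt{2\pi}}\int_{-\infty}^{\infty}e^{ixy-y^2/2}E^{(\zeta)}_{p,q}\big(te^{ky}\big)\,dy.$$
   Context: $[p,q;p,q]_n=\prod_{l=1}^n(p^{-l}-q^l)$ ($=1$ for $n=0$). The $(p,q,\zeta)$-exponential is $E^{(\zeta)}_{p,q}(z)=\sum_{n\ge0}\big(\frac qp\big)^{\zeta n^2/2}\frac{z^n}{[p,q;p,q]_n}$ (the case $\mu=\nu=\zeta/2$ of $E^{\mu,\nu}_{p,q}(z)=\sum_n(q^\mu/p^\nu)^{n^2}z^n/[p,q;p,q]_n$). *)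

(* Defs.v *)
From Stdlib Require Import Reals ClassicalEpsilon.
Open Scope R_scope.

Definition Cplx : Type := (R * R)%type.
Definition RtoC (r : R) : Cplx := (r, 0).
Definition Cadd (z w : Cplx) : Cplx := (fst z + fst w, snd z + snd w).
Definition Cmul (z w : Cplx) : Cplx :=
  (fst z * fst w - snd z * snd w, fst z * snd w + snd z * fst w).
Fixpoint Cpow (z : Cplx) (n : nat) : Cplx :=
  match n with O => (1, 0) | S m => Cmul z (Cpow z m) end.
Definition Cexp (z : Cplx) : Cplx := (exp (fst z) * cos (snd z), exp (fst z) * sin (snd z)).

Fixpoint pqbr (p q : R) (n : nat) : R :=
  match n with
  | O => 1
  | S m => pqbr p q m * (/ p ^ (S m) - q ^ (S m))
  end.

Definition Ecoef (zeta p q : R) (n : nat) : R :=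
  Rpower (q / p) (zeta * INR n ^ 2 / 2) / pqbr p q n.

Fixpoint Epartial (zeta p q : R) (z : Cplx) (N : nat) : Cplx :=
  match N with
  | O => (0, 0)
  | S m => Cadd (Epartial zeta p q z m) (Cmul (RtoC (Ecoef zeta p q m)) (Cpow z m))
  end.

Definition Eseries_sum (zeta p q : R) (z : Cplx) (w : Cplx) : Prop :=
  Un_cv (fun N => fst (Epartial zeta p q z N)) (fst w) /\
  Un_cv (fun N => snd (Epartial zeta p q z N)) (snd w).

Definition Econv (zeta p q : R) (z : Cplx) : Prop := exists w, Eseries_sum zeta p q z w.

Definition Eexp (zeta p q : R) (z : Cplx) : Cplx :=
  epsilon (inhabits (0, 0)) (fun w => Eseries_sum zeta p q z w).

Definition improper_integral (f : R -> Cplx) (l : Cplx) : Prop :=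
  (forall a b, inhabited (Riemann_integrable (fun y => fst (f y)) a b) /\
               inhabited (Riemann_integrable (fun y => snd (f y)) a b)) /\
  (forall eps, eps > 0 -> exists M, forall a b
     (pr1 : Riemann_integrable (fun y => fst (f y)) a b)
     (pr2 : Riemann_integrable (fun y => snd (f y)) a b),
     a <= - M -> M <= b ->
     Rabs (RiemannInt pr1 - fst l) < eps /\ Rabs (RiemannInt pr2 - snd l) < eps).

(* Main.v *)
Require Import Defs.
From Stdlib Require Import Reals Lra Lia ClassicalEpsilon FunctionalExtensionality.
Open Scope R_scope.


Lemma Rabs_le_inv x a : Rabs x <= a -> - a <= x <= a.
Proof. intro H. unfold Rabs in H; destruct (Rcase_abs x); split; lra. Qed.

Ltac ctac := match goal with
  | |- continuity _ => let x := fresh "x" in intro x; ctac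
  | _ => first [ assumption
     | match goal with H : forall _, continuity _ |- _ => apply H end
     | match goal with H : continuity _ |- _ => apply H end
     | apply continuity_pt_minus; ctac | apply continuity_pt_plus; ctac
     | apply continuity_pt_mult; ctac | apply continuity_pt_opp; ctac
     | apply continuity_pt_const; intros ? ?; reflexivity | apply derivable_continuous_pt, derivable_pt_id ]
  end.

Definition Int (f : R -> R) (a b : R) : R :=
  epsilon (inhabits 0) (fun r => exists pr : Riemann_integrable f a b, RiemannInt pr = r).

Lemma Int_eq f a b (pr : Riemann_integrable f a b) : RiemannInt pr = Int f a b.
Proof.
  unfold Int.
  assert (H : exists r, exists pr0 : Riemann_integrable f a b, RiemannInt pr0 = r)
    by (exists (RiemannInt pr); exists pr; reflexivity).
  destruct (epsilon_spec (inhabits 0) _ H) as [pr' E]. rewrite <- E. apply RiemannInt_P5.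
Qed.

Lemma cont_RI f a b : continuity f -> Riemann_integrable f a b.
Proof.
  intro H. destruct (Rle_dec a b).
  - apply continuity_implies_RiemannInt; auto.
  - apply RiemannInt_P1, continuity_implies_RiemannInt; [lra | auto].
Qed.

Lemma Int_chasles f a b c : continuity f -> Int f a b + Int f b c = Int f a c.
Proof.
  intro H. rewrite <- (Int_eq _ _ _ (cont_RI f a b H)), <- (Int_eq _ _ _ (cont_RI f b c H)),
  <- (Int_eq _ _ _ (cont_RI f a c H)). apply RiemannInt_P26.
Qed.

Lemma Int_aa f a : Int f a a = 0.
Proof. rewrite <- (Int_eq _ _ _ (RiemannInt_P7 f a)). apply RiemannInt_P9. Qed.

Lemma Int_swap f a b : continuity f -> Int f a b = - Int f b a.
Proof. intro H. pose proof (Int_chasles f a b a H). rewrite Int_aa in H0. lra. Qed.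

Lemma Int_lin f g a b l : continuity f -> continuity g ->
  Int (fun x => f x + l * g x) a b = Int f a b + l * Int g a b.
Proof.
  intros Hf Hg. pose (p1 := cont_RI f a b Hf). pose (p2 := cont_RI g a b Hg).
  rewrite <- (Int_eq _ _ _ (RiemannInt_P10 l p1 p2)), <- (Int_eq _ _ _ p1), <- (Int_eq _ _ _ p2).
  apply RiemannInt_P13.
Qed.

Lemma Int_const c a b : Int (fun _ => c) a b = c * (b - a).
Proof.
  change (fun _ : R => c) with (fct_cte c).
  rewrite <- (Int_eq _ _ _ (RiemannInt_P14 a b c)). apply RiemannInt_P15.
Qed.

Lemma Int_plus f g a b : continuity f -> continuity g ->
  Int (fun x => f x + g x) a b = Int f a b + Int g a b.
Proof.
  intros. replace (fun x => f x + g x) with (fun x => f x + 1 * g x).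
  rewrite Int_lin; auto; ring. apply functional_extensionality; intro; ring.
Qed.

Lemma Int_minus f g a b : continuity f -> continuity g ->
  Int (fun x => f x - g x) a b = Int f a b - Int g a b.
Proof.
  intros. replace (fun x => f x - g x) with (fun x => f x + (-1) * g x).
  rewrite Int_lin; auto; ring. apply functional_extensionality; intro; ring.
Qed.

Lemma Int_scal f a b c : continuity f -> Int (fun x => c * f x) a b = c * Int f a b.
Proof.
  intros. replace (fun x => c * f x) with (fun x => (fun _ => 0) x + c * f x).
  rewrite Int_lin; auto. rewrite Int_const; ring. apply continuity_const; intros ? ?; auto.
  apply functional_extensionality; intro; ring.
Qed.

Lemma Int_le f g a b : continuity f -> continuity g -> a <= b ->
  (forall x, a <= x <= b -> f x <= g x) -> Int f a b <= Int g a b.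
Proof.
  intros Hf Hg Hab H. rewrite <- (Int_eq _ _ _ (cont_RI f a b Hf)), <- (Int_eq _ _ _ (cont_RI g a b Hg)).
  apply RiemannInt_P19; auto. intros; apply H; lra.
Qed.

Lemma Int_abs_le f g a b : continuity f -> continuity g -> a <= b ->
  (forall x, a <= x <= b -> Rabs (f x) <= g x) -> Rabs (Int f a b) <= Int g a b.
Proof.
  intros Hf Hg Hab H. apply Rabs_le. split.
  - assert (Int (fun x => -1 * g x) a b <= Int f a b).
    { apply Int_le; auto. reg. intros x Hx. specialize (H x Hx). apply Rabs_le_inv in H. lra. }
    rewrite Int_scal in H0; auto. lra.
  - apply Int_le; auto. intros x Hx. specialize (H x Hx). apply Rabs_le_inv in H. lra.
Qed.

Lemma Int_bound_const g a b K : continuity g ->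
  (forall y, Rmin a b <= y <= Rmax a b -> Rabs (g y) <= K) -> Rabs (Int g a b) <= K * Rabs (b - a).
Proof.
  intros Hg H. destruct (Rle_dec a b).
  - rewrite Rmin_left, Rmax_right in H by lra. rewrite (Rabs_right (b - a)) by lra.
    rewrite <- Int_const. apply Int_abs_le; auto. reg.
  - rewrite Rmin_right, Rmax_left in H by lra. rewrite (Rabs_left (b - a)) by lra.
    rewrite Int_swap, Rabs_Ropp by auto. replace (K * - (b - a)) with (K * (a - b)) by ring.
    rewrite <- Int_const. apply Int_abs_le; auto. reg. lra.
Qed.

Lemma deriv_Int f a x : continuity f -> derivable_pt_lim (fun u => Int f a u) x (f x).
Proof.
  intros Hf eps Heps.
  destruct (Hf x (eps/2) ltac:(lra)) as [d [Hd Hc]].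
  exists (mkposreal d Hd). intros h Hh0 Hh. simpl in Hh.
  rewrite <- (Int_chasles f a x (x+h) Hf).
  replace ((Int f a x + Int f x (x + h) - Int f a x) / h - f x)
    with (Int (fun y => f y - f x) x (x+h) / h).
  2:{ rewrite Int_minus; auto. rewrite Int_const. field; auto. apply continuity_const; intros ? ?; auto. }
  assert (B : Rabs (Int (fun y => f y - f x) x (x + h)) <= eps/2 * Rabs (x + h - x)).
  { apply Int_bound_const. reg. intros y Hy.
    destruct (Req_dec y x) as [->|Hne]. rewrite Rminus_diag, Rabs_R0; lra.
    left. apply (Hc y). split. split. exact I. auto. simpl; unfold R_dist.
    apply Rabs_def2 in Hh; unfold Rmin, Rmax in Hy; destruct (Rle_dec x (x+h)); apply Rabs_def1; lra. }
  replace (x + h - x) with h in B by ring.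
  unfold Rdiv. rewrite Rabs_mult, Rabs_inv.
  apply Rle_lt_trans with (eps / 2 * Rabs h * / Rabs h).
  apply Rmult_le_compat_r; auto. left; apply Rinv_0_lt_compat, Rabs_pos_lt; auto.
  field_simplify. lra. apply Rabs_no_R0; auto.
Qed.

Lemma const_deriv0 G a b : (forall x, derivable_pt_lim G x 0) -> G b = G a.
Proof.
  intros H. destruct (Rtotal_order a b) as [Hl|[He|Hl]].
  - destruct (MVT_cor2 G (fun _ => 0) a b Hl (fun c _ => H c)) as [c [E _]]. lra.
  - subst; auto.
  - destruct (MVT_cor2 G (fun _ => 0) b a Hl (fun c _ => H c)) as [c [E _]]. lra.
Qed.

Lemma FTC F f a b : (forall x, derivable_pt_lim F x (f x)) -> continuity f ->
  Int f a b = F b - F a.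
Proof.
  intros HF Hf.
  assert (E : (fun u => Int f a u - F u) b = (fun u => Int f a u - F u) a).
  { apply (const_deriv0 (fun u => Int f a u - F u)). intro x. replace 0 with (f x - f x) by ring.
    apply derivable_pt_lim_minus. apply deriv_Int; auto. apply HF. }
  simpl in E. rewrite Int_aa in E. lra.
Qed.

Lemma dpl_cont F x l : derivable_pt_lim F x l -> continuity_pt F x.
Proof. intro H. apply derivable_continuous_pt. exists l; exact H. Qed.

Lemma Int_subst g phi phi' a b : continuity g -> (forall x, derivable_pt_lim phi x (phi' x)) ->
  continuity phi' ->
  Int (fun u => g (phi u) * phi' u) a b = Int g (phi a) (phi b).
Proof.
  intros Hg Hp Hp'.
  rewrite (FTC (fun u => Int g (phi a) (phi u))).
  - rewrite Int_aa. ring.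
  - intro x. apply (derivable_pt_lim_comp phi (fun v => Int g (phi a) v)). apply Hp. apply deriv_Int; auto.
  - intro x. apply continuity_pt_mult; auto. apply (continuity_pt_comp phi g). apply (dpl_cont _ _ _ (Hp x)). auto.
Qed.

Lemma Lip_deriv f f' a b K : (forall c, derivable_pt_lim f c (f' c)) ->
  (forall c, Rmin a b <= c <= Rmax a b -> Rabs (f' c) <= K) ->
  Rabs (f b - f a) <= K * Rabs (b - a).
Proof.
  intros Hd Hb. destruct (Rtotal_order a b) as [Hl|[He|Hl]].
  - destruct (MVT_cor2 f f' a b Hl (fun c _ => Hd c)) as [c [E Hc]]. rewrite E, Rabs_mult.
    apply Rmult_le_compat_r. apply Rabs_pos. apply Hb. unfold Rmin, Rmax; destruct (Rle_dec a b); lra.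
  - subst. rewrite !Rminus_diag, Rabs_R0. assert (0 <= K).
    { eapply Rle_trans. apply Rabs_pos. apply (Hb b). unfold Rmin, Rmax; destruct (Rle_dec b b); lra. }
    lra.
  - destruct (MVT_cor2 f f' b a Hl (fun c _ => Hd c)) as [c [E Hc]].
    rewrite <- Rabs_Ropp. replace (- (f b - f a)) with (f a - f b) by ring. rewrite E, Rabs_mult.
    rewrite <- (Rabs_Ropp (b - a)). replace (- (b - a)) with (a - b) by ring.
    apply Rmult_le_compat_r. apply Rabs_pos. apply Hb. unfold Rmin, Rmax; destruct (Rle_dec a b); lra.
Qed.

Lemma dpl_shift f s d l : derivable_pt_lim f (s + d) l -> derivable_pt_lim (fun d' => f (s + d')) d l.
Proof.
  intros H eps He. destruct (H eps He) as [del Hdel]. exists del. intros h Hh Hh'.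
  replace (s + (d + h)) with (s + d + h) by ring. apply Hdel; auto.
Qed.

Lemma Taylor2 phi phi1 phi2 s d K : (forall u, derivable_pt_lim phi u (phi1 u)) ->
  (forall u, derivable_pt_lim phi1 u (phi2 u)) ->
  (forall u, s - 1 <= u <= s + 1 -> Rabs (phi2 u) <= K) -> Rabs d <= 1 ->
  Rabs (phi (s + d) - phi s - d * phi1 s) <= K * d ^ 2.
Proof.
  intros H1 H2 HK Hd. apply Rabs_le_inv in Hd as [Hd1 Hd2].
  pose (psi := fun e => phi (s + e) - phi s - e * phi1 s).
  assert (Hpsi : forall e, derivable_pt_lim psi e (phi1 (s + e) - phi1 s)).
  { intro e. unfold psi. replace (phi1 (s + e) - phi1 s) with (phi1 (s+e) - 0 - (1 * phi1 s)) by ring.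
    apply derivable_pt_lim_minus. apply derivable_pt_lim_minus. apply dpl_shift; auto.
    apply derivable_pt_lim_const.
    apply (derivable_pt_lim_scal_right id). apply derivable_pt_lim_id. }
  assert (Hb : forall c, Rmin 0 d <= c <= Rmax 0 d -> Rabs (phi1 (s + c) - phi1 s) <= K * Rabs d).
  { intros c Hc. replace (phi1 s) with ((fun e => phi1 (s + e)) 0) by (simpl; f_equal; ring).
    eapply Rle_trans. apply (Lip_deriv (fun e => phi1 (s + e)) (fun e => phi2 (s + e)) 0 c K).
    intro. apply dpl_shift; auto. intros c' Hc'. apply HK.
    unfold Rmin, Rmax in *; destruct (Rle_dec 0 d), (Rle_dec 0 c); lra.
    apply Rmult_le_compat_l.
    { eapply Rle_trans. apply Rabs_pos. apply (HK s). lra. }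
    rewrite Rminus_0_r. unfold Rmin, Rmax in *; destruct (Rle_dec 0 d); apply Rabs_le; split_Rabs; lra. }
  pose proof (Lip_deriv psi _ 0 d (K * Rabs d) Hpsi Hb) as L.
  unfold psi in L. replace (s + 0) with s in L by ring. rewrite Rminus_0_r in L.
  replace (phi s - phi s - 0 * phi1 s) with 0 in L by ring. rewrite Rminus_0_r in L.
  replace (K * d ^ 2) with (K * Rabs d * Rabs d). exact L.
  rewrite Rmult_assoc, <- Rabs_mult, Rabs_right. ring. nra.
Qed.

Lemma Leibniz (h g : R -> R -> R) a b s K : a <= b -> 0 <= K ->
  (forall s', continuity (h s')) -> (forall s', continuity (g s')) ->
  (forall d u, Rabs d <= 1 -> a <= u <= b -> Rabs (h (s+d) u - h s u - d * g s u) <= K * d^2) ->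
  derivable_pt_lim (fun s' => Int (h s') a b) s (Int (g s) a b).
Proof.
  intros Hab HK Hh Hg HB eps Heps.
  assert (Hpos : 0 < Rmin 1 (eps / (K * (b - a) + 1))).
  { apply Rmin_pos. lra. apply Rdiv_lt_0_compat; auto. nra. }
  exists (mkposreal _ Hpos). intros d Hd0 Hd. simpl in Hd.
  assert (Hd1 : Rabs d <= 1) by (eapply Rle_trans; [left; apply Hd| apply Rmin_l]).
  assert (Hd2 : Rabs d < eps / (K * (b - a) + 1)) by (eapply Rlt_le_trans; [apply Hd| apply Rmin_r]).
  replace ((Int (h (s + d)) a b - Int (h s) a b) / d - Int (g s) a b)
    with (Int (fun u => h (s + d) u - h s u - d * g s u) a b / d).
  2:{ rewrite Int_minus, Int_minus, Int_scal; try ctac. field; auto. }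
  assert (B : Rabs (Int (fun u => h (s + d) u - h s u - d * g s u) a b) <= Int (fun _ => K * d^2) a b).
  { apply Int_abs_le; auto; try ctac; try (intros; apply HB; auto). }
  rewrite Int_const in B. unfold Rdiv. rewrite Rabs_mult, Rabs_inv.
  assert (Ha : 0 < Rabs d) by (apply Rabs_pos_lt; auto).
  assert (Hd2' : d ^ 2 = Rabs d * Rabs d) by (rewrite <- Rabs_mult, Rabs_right; [ring| nra]).
  set (c := K * (b - a)) in *. assert (Hc : 0 <= c) by (unfold c; nra).
  set (u := eps / (c + 1)) in *. assert (Hu : 0 < u) by (unfold u; apply Rdiv_lt_0_compat; lra).
  assert (Eu : eps = u * (c + 1)) by (unfold u; field; lra).
  assert (B2 : Rabs (Int (fun u : R => h (s + d) u - h s u - d * g s u) a b) <= c * Rabs d * Rabs d)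
    by (replace (c * Rabs d * Rabs d) with (K * d^2 * (b-a)) by (unfold c; rewrite Hd2'; ring); exact B).
  apply Rle_lt_trans with (c * Rabs d).
  - replace (c * Rabs d) with (c * Rabs d * Rabs d * / Rabs d) by (field; lra).
    apply Rmult_le_compat_r; auto. left; apply Rinv_0_lt_compat; auto.
  - nra.
Qed.


Lemma dpl_eq f x l l' : derivable_pt_lim f x l -> l = l' -> derivable_pt_lim f x l'.
Proof. intros H ->; exact H. Qed.
Lemma D_const c x : derivable_pt_lim (fun _ => c) x 0.
Proof. apply derivable_pt_lim_const. Qed.
Lemma D_id x : derivable_pt_lim (fun y => y) x 1.
Proof. apply derivable_pt_lim_id. Qed.
Lemma D_plus f g x a b : derivable_pt_lim f x a -> derivable_pt_lim g x b ->
  derivable_pt_lim (fun y => f y + g y) x (a + b).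
Proof. intros; apply derivable_pt_lim_plus; auto. Qed.
Lemma D_minus f g x a b : derivable_pt_lim f x a -> derivable_pt_lim g x b ->
  derivable_pt_lim (fun y => f y - g y) x (a - b).
Proof. intros; apply derivable_pt_lim_minus; auto. Qed.
Lemma D_mult f g x a b : derivable_pt_lim f x a -> derivable_pt_lim g x b ->
  derivable_pt_lim (fun y => f y * g y) x (a * g x + f x * b).
Proof. intros; apply derivable_pt_lim_mult; auto. Qed.
Lemma D_opp f x a : derivable_pt_lim f x a -> derivable_pt_lim (fun y => - f y) x (- a).
Proof. intros; apply derivable_pt_lim_opp; auto. Qed.
Lemma D_sq f x a : derivable_pt_lim f x a -> derivable_pt_lim (fun y => f y ^ 2) x (2 * f x * a).
Proof. intros. replace (fun y => f y ^ 2) with (fun y => f y * f y)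
  by (apply functional_extensionality; intro; ring).
  eapply dpl_eq. apply D_mult; eauto. ring. Qed.
Lemma D_exp f x a : derivable_pt_lim f x a -> derivable_pt_lim (fun y => exp (f y)) x (exp (f x) * a).
Proof. intros. apply (derivable_pt_lim_comp f exp); auto. apply derivable_pt_lim_exp. Qed.
Lemma D_cos f x a : derivable_pt_lim f x a -> derivable_pt_lim (fun y => cos (f y)) x (- sin (f x) * a).
Proof. intros. apply (derivable_pt_lim_comp f cos); auto. apply derivable_pt_lim_cos. Qed.
Lemma D_sin f x a : derivable_pt_lim f x a -> derivable_pt_lim (fun y => sin (f y)) x (cos (f x) * a).
Proof. intros. apply (derivable_pt_lim_comp f sin); auto. apply derivable_pt_lim_sin. Qed.
Lemma D_atan x : derivable_pt_lim atan x (/ (1 + x^2)).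
Proof. apply derivable_pt_lim_atan. Qed.

Ltac dtac := first [ apply D_const | apply D_id
  | apply D_sq; dtac
  | apply D_plus; dtac | apply D_minus; dtac | apply D_mult; dtac | apply D_opp; dtac
  | apply D_exp; dtac | apply D_cos; dtac | apply D_sin; dtac ].
Ltac dsolve := eapply dpl_eq; [dtac | cbv beta].

Definition IInt (f : R -> R) (L : R) : Prop :=
  forall eps, 0 < eps -> exists M, 0 <= M /\
    forall a b, a <= - M -> M <= b -> Rabs (Int f a b - L) < eps.

Lemma IInt_ext f g L : (forall y, f y = g y) -> IInt f L -> IInt g L.
Proof. intros H. replace g with f; auto. apply functional_extensionality; auto. Qed.

Lemma IInt_lin f g L1 L2 c1 c2 : continuity f -> continuity g -> IInt f L1 -> IInt g L2 ->
  IInt (fun y => c1 * f y + c2 * g y) (c1 * L1 + c2 * L2).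
Proof.
  intros Hf Hg H1 H2 eps Heps.
  set (e := eps / (Rabs c1 + Rabs c2 + 1)).
  assert (He : 0 < e) by (unfold e; apply Rdiv_lt_0_compat; auto; pose proof (Rabs_pos c1); pose proof (Rabs_pos c2); lra).
  destruct (H1 e He) as [M1 [HM1 B1]]. destruct (H2 e He) as [M2 [HM2 B2]].
  exists (Rmax M1 M2). split. eapply Rle_trans; [apply HM1| apply Rmax_l].
  intros a b Ha Hb.
  assert (Ha1 : a <= - M1) by (pose proof (Rmax_l M1 M2); lra).
  assert (Ha2 : a <= - M2) by (pose proof (Rmax_r M1 M2); lra).
  assert (Hb1 : M1 <= b) by (pose proof (Rmax_l M1 M2); lra).
  assert (Hb2 : M2 <= b) by (pose proof (Rmax_r M1 M2); lra).
  specialize (B1 a b Ha1 Hb1). specialize (B2 a b Ha2 Hb2).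
  rewrite Int_plus, Int_scal, Int_scal by (try ctac; auto).
  replace (c1 * Int f a b + c2 * Int g a b - (c1 * L1 + c2 * L2))
    with (c1 * (Int f a b - L1) + c2 * (Int g a b - L2)) by ring.
  eapply Rle_lt_trans. apply Rabs_triang. rewrite !Rabs_mult.
  apply Rle_lt_trans with (Rabs c1 * e + Rabs c2 * e).
  apply Rplus_le_compat; apply Rmult_le_compat_l; try apply Rabs_pos; lra.
  replace eps with (e * (Rabs c1 + Rabs c2 + 1)) by (unfold e; field; pose proof (Rabs_pos c1); pose proof (Rabs_pos c2); lra).
  pose proof (Rabs_pos c1); pose proof (Rabs_pos c2); nra.
Qed.

Lemma IInt_shift f L al : continuity f -> IInt f L -> IInt (fun y => f (y - al)) L.
Proof.
  intros Hf H eps Heps. destruct (H eps Heps) as [M [HM B]].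
  exists (M + Rabs al). split. pose proof (Rabs_pos al); lra.
  intros a b Ha Hb.
  assert (E : Int (fun y => f (y - al)) a b = Int f (a - al) (b - al)).
  { rewrite <- (Int_subst f (fun y => y - al) (fun _ => 1)); auto.
    f_equal. apply functional_extensionality; intro; ring.
    intro; dsolve; ring. intro; apply continuity_pt_const; intros ? ?; auto. }
  rewrite E. apply B; pose proof (Rabs_le_inv al _ (Rle_refl _)); lra.
Qed.

Lemma exp_le_exp_le x y : x <= y -> exp x <= exp y.
Proof. intros [H|H]. left; apply exp_increasing; auto. subst; lra. Qed.

Definition gs (u : R) := exp (- u ^ 2 / 2).

Lemma gs_cont : continuity gs.
Proof. unfold gs; reg. Qed.

Lemma gs_pos u : 0 < gs u.
Proof. apply exp_pos. Qed.

Lemma gs_even u : gs (- u) = gs u.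
Proof. unfold gs. replace ((-u)^2) with (u^2) by ring. reflexivity. Qed.

Lemma exp_ge_half v : 0 <= v -> 1 + v + v^2/4 <= exp v.
Proof.
  intro Hv. replace (exp v) with (exp (v/2) * exp (v/2)) by (rewrite <- exp_plus; f_equal; field).
  pose proof (exp_ineq1_le (v/2)). nra.
Qed.

Lemma gs_le_inv u : 0 < u -> gs u <= / u.
Proof.
  intro Hu. unfold gs. replace (- u ^ 2 / 2) with (-(u^2/2)) by field.
  rewrite exp_Ropp. apply Rinv_le_contravar; auto.
  pose proof (exp_ineq1_le (u^2/2)). nra.
Qed.


Definition A t := Int gs 0 t.
Definition hB (s x : R) := exp (- s^2 * (1 + x^2) / 2) * / (1 + x^2).
Definition gB (s x : R) := - s * exp (- s^2 * (1 + x^2) / 2).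
Definition B t := Int (hB t) 0 1.

Lemma one_x2 x : 0 < 1 + x ^ 2.
Proof. nra. Qed.

Lemma hB_cont s : continuity (hB s).
Proof. unfold hB. intro x. apply continuity_pt_mult. reg. apply continuity_pt_inv. reg.
  pose proof (one_x2 x); lra. Qed.

Lemma gB_cont s : continuity (gB s).
Proof. unfold gB; reg. Qed.

Lemma bnd2 v : 0 <= v -> Rabs (v - 1) * exp (- v / 2) <= 2.
Proof.
  intro Hv. pose proof (exp_ineq1_le (v/2)). pose proof (exp_pos (v/2)).
  replace (- v / 2) with (- (v/2)) by field. rewrite exp_Ropp.
  apply Rle_trans with ((v + 1) * / exp (v / 2)).
  apply Rmult_le_compat_r. left; apply Rinv_0_lt_compat; auto.
  unfold Rabs; destruct (Rcase_abs (v-1)); lra.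
  apply Rmult_le_reg_r with (exp (v/2)); auto. rewrite Rmult_assoc, Rinv_l by lra. lra.
Qed.

Lemma B_deriv t : derivable_pt_lim B t (Int (gB t) 0 1).
Proof.
  unfold B. apply (Leibniz hB gB 0 1 t 2); try lra. apply hB_cont. apply gB_cont.
  intros d u Hd Hu.
  apply (Taylor2 (fun s => hB s u) (fun s => gB s u)
    (fun s => (s^2 * (1 + u^2) - 1) * exp (- s^2 * (1 + u^2) / 2))); auto.
  - intro s. unfold hB, gB. dsolve. pose proof (one_x2 u). field. lra.
  - intro s. unfold gB. dsolve. field.
  - intros s _. rewrite Rabs_mult, (Rabs_right (exp _)) by (left; apply exp_pos).
    replace (- s ^ 2 * (1 + u ^ 2) / 2) with (- (s^2 * (1+u^2)) / 2) by field.
    apply bnd2. pose proof (one_x2 u). nra.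
Qed.

Lemma gB_int t : Int (gB t) 0 1 = - gs t * A t.
Proof.
  replace (gB t) with (fun x => - gs t * (gs (t * x) * t)).
  - rewrite Int_scal. unfold A. rewrite (Int_subst gs (fun x => t * x) (fun _ => t)).
    f_equal. f_equal; ring. apply gs_cont. intro; dsolve; ring.
    intro; apply continuity_pt_const; intros ? ?; auto. unfold gs; reg.
  - apply functional_extensionality; intro x. unfold gB, gs.
    transitivity (- t * (exp (- t^2/2) * exp (- (t*x)^2/2))). ring.
    rewrite <- exp_plus. replace (- t ^ 2 / 2 + - (t * x) ^ 2 / 2) with (- t ^ 2 * (1 + x ^ 2) / 2) by field.
    reflexivity.
Qed.

Lemma F_const t : A t ^ 2 + 2 * B t = PI / 2.
Proof.
  assert (E : (fun t => A t ^ 2 + 2 * B t) t = (fun t => A t ^ 2 + 2 * B t) 0).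
  { apply (const_deriv0 (fun t => A t ^ 2 + 2 * B t)). intro s. eapply dpl_eq.
    apply D_plus. apply D_sq. unfold A. apply deriv_Int, gs_cont.
    apply D_mult. apply D_const. apply B_deriv.
    rewrite gB_int. ring. }
  cbv beta in E. rewrite E. unfold A. rewrite Int_aa.
  unfold B. replace (hB 0) with (fun x => / (1 + x^2)).
  rewrite (FTC atan). rewrite atan_1, atan_0. simpl; field.
  apply D_atan. intro x; apply continuity_pt_inv. reg. pose proof (one_x2 x); lra.
  apply functional_extensionality; intro x. unfold hB.
  replace (- 0 ^ 2 * (1 + x ^ 2) / 2) with 0 by field. rewrite exp_0. ring.
Qed.

Lemma B_bounds t : 0 <= B t <= gs t.
Proof.
  unfold B. split.
  - assert (H : Int (fun _ => 0) 0 1 <= Int (hB t) 0 1).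
    { apply Int_le; try lra. intro; apply continuity_pt_const; intros ? ?; auto. apply hB_cont.
      intros x _. unfold hB. left. apply Rmult_lt_0_compat. apply exp_pos. apply Rinv_0_lt_compat, one_x2. }
    rewrite Int_const in H. lra.
  - replace (gs t) with (Int (fun _ => gs t) 0 1) by (rewrite Int_const; ring).
    apply Int_le; try lra. apply hB_cont. intro; apply continuity_pt_const; intros ? ?; auto.
    intros x _. unfold hB, gs. pose proof (one_x2 x).
    apply Rle_trans with (exp (- t ^ 2 * (1 + x ^ 2) / 2) * 1).
    apply Rmult_le_compat_l. left; apply exp_pos. rewrite <- Rinv_1. apply Rinv_le_contravar; nra.
    rewrite Rmult_1_r. apply exp_le_exp_le. nra.
Qed.

Lemma A_nonneg t : 0 <= t -> 0 <= A t.
Proof.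
  intro Ht. unfold A. assert (H : Int (fun _ => 0) 0 t <= Int gs 0 t).
  { apply Int_le; auto. intro; apply continuity_pt_const; intros ? ?; auto. apply gs_cont.
    intros; left; apply gs_pos. }
  rewrite Int_const in H. lra.
Qed.

Lemma A_odd t : A (- t) = - A t.
Proof.
  unfold A. replace (Int gs 0 (-t)) with (Int gs (-0) (-t)) by (f_equal; ring).
  rewrite <- (Int_subst gs (fun u => - u) (fun _ => -1)).
  - replace (fun u => gs (- u) * -1) with (fun u => -1 * gs u).
    rewrite Int_scal. ring. apply gs_cont.
    apply functional_extensionality; intro; rewrite gs_even; ring.
  - apply gs_cont.
  - intro; dsolve; ring.
  - intro; apply continuity_pt_const; intros ? ?; auto.
Qed.

Definition rg := sqrt (PI / 2).

Lemma rg_pos : 0 < rg.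
Proof. unfold rg. apply sqrt_lt_R0. pose proof PI_RGT_0; lra. Qed.

Lemma rg_sq : rg * rg = PI / 2.
Proof. unfold rg. apply sqrt_sqrt. pose proof PI_RGT_0; lra. Qed.

Lemma two_rg : 2 * rg = sqrt (2 * PI).
Proof.
  unfold rg. replace (2 * PI) with (2 ^ 2 * (PI / 2)) by field.
  rewrite sqrt_mult, sqrt_pow2; try lra. pose proof PI_RGT_0; lra.
Qed.

Lemma A_approx t : 0 <= t -> Rabs (A t - rg) <= 2 * gs t / rg.
Proof.
  intro Ht. pose proof (F_const t). pose proof (B_bounds t). pose proof (A_nonneg t Ht).
  pose proof rg_pos. pose proof rg_sq.
  assert (E : A t - rg = (A t ^ 2 - rg * rg) / (A t + rg)) by (field; lra).
  rewrite E. unfold Rdiv. rewrite Rabs_mult, Rabs_inv. rewrite (Rabs_right (A t + rg)) by lra.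
  apply Rle_trans with (2 * gs t * / (A t + rg)).
  apply Rmult_le_compat_r. left; apply Rinv_0_lt_compat; lra.
  apply Rabs_le. split; nra.
  apply Rmult_le_compat_l. pose proof (gs_pos t); lra. apply Rinv_le_contravar; lra.
Qed.

Lemma gs_Int_bound a b : a <= 0 -> 0 <= b ->
  Rabs (Int gs a b - sqrt (2 * PI)) <= 2 * (gs a + gs b) / rg.
Proof.
  intros Ha Hb. rewrite <- (Int_chasles gs a 0 b gs_cont), (Int_swap gs a 0) by apply gs_cont.
  fold (A a) (A b). pose proof (A_odd (-a)) as Ea. rewrite Ropp_involutive in Ea.
  rewrite Ea, <- two_rg. rewrite <- (gs_even a).
  replace (- - A (- a) + A b - 2 * rg) with ((A (-a) - rg) + (A b - rg)) by ring.
  eapply Rle_trans. apply Rabs_triang. pose proof (A_approx (-a) ltac:(lra)). pose proof (A_approx b Hb).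
  replace (2 * (gs (-a) + gs b) / rg) with (2 * gs (-a) / rg + 2 * gs b / rg) by (field; pose rg_pos; lra).
  lra.
Qed.


Lemma IInt_eqL f L L' : IInt f L -> L = L' -> IInt f L'.
Proof. intros H ->; auto. Qed.

Lemma cst_cont c : continuity (fun _ => c).
Proof. intro; apply continuity_pt_const; intros ? ?; auto. Qed.

Lemma tail_right f M b : continuity f -> (forall u, Rabs (f u) <= gs u) -> 1 <= M -> M <= b ->
  Rabs (Int f M b) <= gs M.
Proof.
  intros Hf Hb HM HMb.
  apply Rle_trans with (Int (fun u => u * gs u) M b).
  - apply Int_abs_le; auto. unfold gs; reg. intros u Hu. eapply Rle_trans. apply Hb.
    pose proof (gs_pos u). nra.
  - rewrite (FTC (fun u => - gs u)). pose proof (gs_pos b); lra.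
    intro; unfold gs; dsolve; field. unfold gs; reg.
Qed.

Lemma tail_left f M a : continuity f -> (forall u, Rabs (f u) <= gs u) -> 1 <= M -> a <= - M ->
  Rabs (Int f a (- M)) <= gs M.
Proof.
  intros Hf Hb HM HMb.
  apply Rle_trans with (Int (fun u => - u * gs u) a (- M)).
  - apply Int_abs_le; auto. unfold gs; reg. intros u Hu. eapply Rle_trans. apply Hb.
    pose proof (gs_pos u). nra.
  - rewrite (FTC gs). rewrite gs_even. pose proof (gs_pos a); lra.
    intro; unfold gs; dsolve; field. unfold gs; reg.
Qed.

Lemma IInt_sym f L : continuity f -> (forall u, Rabs (f u) <= gs u) ->
  (forall eps, 0 < eps -> exists M0, forall M, M0 <= M -> Rabs (Int f (- M) M - L) < eps) ->
  IInt f L.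
Proof.
  intros Hf Hb H eps Heps. destruct (H (eps/3) ltac:(lra)) as [M0 HM0].
  set (M := Rmax M0 (Rmax 1 (3 / eps))).
  assert (H1 : 1 <= M) by (unfold M; eapply Rle_trans; [apply (Rmax_l 1 (3/eps))| apply Rmax_r]).
  assert (H2 : 3 / eps <= M) by (unfold M; eapply Rle_trans; [apply (Rmax_r 1 (3/eps))| apply Rmax_r]).
  assert (H3 : M0 <= M) by (unfold M; apply Rmax_l).
  assert (HgM : gs M <= eps / 3).
  { eapply Rle_trans. apply gs_le_inv; lra.
    replace (eps / 3) with (/ (3 / eps)) by (field; lra). apply Rinv_le_contravar; auto.
    apply Rdiv_lt_0_compat; lra. }
  exists M. split. lra. intros a b Ha Hb'.
  rewrite <- (Int_chasles f a (- M) b Hf), <- (Int_chasles f (- M) M b Hf).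
  pose proof (tail_left f M a Hf Hb H1 Ha). pose proof (tail_right f M b Hf Hb H1 Hb').
  pose proof (HM0 M H3).
  replace (Int f a (- M) + (Int f (- M) M + Int f M b) - L)
    with (Int f a (- M) + (Int f (- M) M - L) + Int f M b) by ring.
  eapply Rle_lt_trans. apply Rabs_triang. eapply Rle_lt_trans. apply Rplus_le_compat_r. apply Rabs_triang.
  lra.
Qed.

Definition hc (be u : R) := gs u * cos (be * u).
Definition hs (be u : R) := gs u * sin (be * u).

Lemma hc_cont be : continuity (hc be).
Proof. unfold hc, gs; reg. Qed.
Lemma hs_cont be : continuity (hs be).
Proof. unfold hs, gs; reg. Qed.

Lemma hc_bnd be u : Rabs (hc be u) <= gs u.
Proof. unfold hc. rewrite Rabs_mult, (Rabs_right (gs u)) by (left; apply gs_pos).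
  pose proof (COS_bound (be*u)). pose proof (gs_pos u).
  assert (Rabs (cos (be * u)) <= 1) by (apply Rabs_le; lra). nra. Qed.
Lemma hs_bnd be u : Rabs (hs be u) <= gs u.
Proof. unfold hs. rewrite Rabs_mult, (Rabs_right (gs u)) by (left; apply gs_pos).
  pose proof (SIN_bound (be*u)). pose proof (gs_pos u).
  assert (Rabs (sin (be * u)) <= 1) by (apply Rabs_le; lra). nra. Qed.

Lemma hs_sym be M : Int (hs be) (- M) M = 0.
Proof.
  assert (E : Int (fun u => hs be (- u) * -1) (- M) M = Int (hs be) (- - M) (- M)).
  { apply (Int_subst (hs be) (fun u => - u) (fun _ => -1)). apply hs_cont. intro; dsolve; ring. apply cst_cont. }
  replace (fun u => hs be (- u) * -1) with (hs be) in E.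
  rewrite Ropp_involutive, (Int_swap (hs be) M (- M)) in E by apply hs_cont. lra.
  apply functional_extensionality; intro u. unfold hs. rewrite gs_even.
  replace (be * - u) with (- (be * u)) by ring. rewrite sin_neg. ring.
Qed.

Lemma u2gs u : u ^ 2 * gs u <= 1.
Proof.
  unfold gs. replace (- u ^ 2 / 2) with (- (u^2/2)) by field. rewrite exp_Ropp.
  pose proof (exp_ge_half (u^2/2) ltac:(nra)). pose proof (exp_pos (u^2/2)).
  apply Rmult_le_reg_r with (exp (u ^ 2 / 2)); auto. rewrite Rmult_assoc, Rinv_l by lra.
  assert (0 <= (u^2/4 - 1)^2) by apply pow2_ge_0.
  assert ((u^2/2)^2 / 4 = u^2 * u^2 / 16) by field. nra.
Qed.

Definition gc (be u : R) := gs u * (- (u * sin (be * u))).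

Lemma CM_deriv M be : 0 <= M ->
  derivable_pt_lim (fun b => Int (hc b) (- M) M) be (Int (gc be) (- M) M).
Proof.
  intro HM. apply (Leibniz hc gc (- M) M be 1); try lra. apply hc_cont. intro; unfold gc, gs; reg.
  intros d u Hd Hu.
  apply (Taylor2 (fun s => hc s u) (fun s => gc s u) (fun s => gs u * (- (u * (u * cos (s * u)))))); auto.
  - intro s. unfold hc, gc. dsolve. ring.
  - intro s. unfold gc. dsolve. ring.
  - intros s _. rewrite Rabs_mult, (Rabs_right (gs u)) by (left; apply gs_pos).
    rewrite Rabs_Ropp, !Rabs_mult. pose proof (COS_bound (s*u)). pose proof (gs_pos u).
    assert (Rabs (cos (s * u)) <= 1) by (apply Rabs_le; lra).
    pose proof (u2gs u). pose proof (Rabs_pos u). pose proof (Rabs_pos (cos (s*u))).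
    assert (E2 : Rabs u * Rabs u = u^2) by (rewrite <- Rabs_mult, Rabs_right; [ring| nra]).
    replace (gs u * (Rabs u * (Rabs u * Rabs (cos (s * u))))) with ((u^2 * gs u) * Rabs (cos (s * u)))
      by (rewrite <- E2; ring).
    rewrite <- (Rmult_1_l 1). apply Rmult_le_compat; auto. pose proof (pow2_ge_0 u); nra.
Qed.

Lemma gc_int M be : Int (gc be) (- M) M = 2 * gs M * sin (be * M) - be * Int (hc be) (- M) M.
Proof.
  assert (E : Int (fun u => gc be u + be * hc be u) (- M) M = hs be M - hs be (- M)).
  { apply FTC. intro u. unfold gc, hc, hs, gs. dsolve. field. intro; unfold gc, hc, gs; reg. }
  rewrite Int_lin in E by (intro; unfold gc, hc, gs; reg).
  unfold hs in E. rewrite gs_even in E. replace (be * - M) with (- (be * M)) in E by ring.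
  rewrite sin_neg in E. lra.
Qed.

Lemma CM_approx M be : 1 <= M ->
  Rabs (Int (hc be) (- M) M - sqrt (2 * PI) * exp (- be ^ 2 / 2)) <= gs M * (2 * Rabs be + 4 / rg).
Proof.
  intro HM.
  set (D := fun b => exp (b ^ 2 / 2) * Int (hc b) (- M) M).
  assert (HD : forall b, derivable_pt_lim D b (2 * exp (b^2/2) * gs M * sin (b * M))).
  { intro b. unfold D. eapply dpl_eq. apply D_mult. apply D_exp. dtac. apply CM_deriv. lra.
    cbv beta. rewrite gc_int. field. }
  pose proof (Lip_deriv D _ 0 be (2 * exp (be^2/2) * gs M) HD) as L.
  assert (L2 : Rabs (D be - D 0) <= 2 * exp (be ^ 2 / 2) * gs M * Rabs (be - 0)).
  { apply L. intros c Hc. rewrite !Rabs_mult. pose proof (SIN_bound (c * M)).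
    assert (Rabs (sin (c * M)) <= 1) by (apply Rabs_le; lra).
    rewrite (Rabs_right 2), (Rabs_right (exp _)), (Rabs_right (gs M)) by (try left; try apply exp_pos; try apply gs_pos; lra).
    assert (exp (c^2/2) <= exp (be^2/2)).
    { apply exp_le_exp_le. unfold Rmin, Rmax in Hc; destruct (Rle_dec 0 be); nra. }
    pose proof (exp_pos (c^2/2)). pose proof (gs_pos M). pose proof (Rabs_pos (sin (c * M))).
    apply Rle_trans with (2 * exp (c^2/2) * gs M * 1).
    apply Rmult_le_compat_l; auto. left. apply Rmult_lt_0_compat; auto. lra.
    rewrite Rmult_1_r. apply Rmult_le_compat_r. lra. apply Rmult_le_compat_l; lra. }
  unfold D in L2. replace (0 ^ 2 / 2) with 0 in L2 by field. rewrite exp_0, Rmult_1_l, Rminus_0_r in L2.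
  replace (hc 0) with gs in L2 by (apply functional_extensionality; intro; unfold hc;
    replace (0 * x) with 0 by ring; rewrite cos_0; ring).
  pose proof (gs_Int_bound (- M) M ltac:(lra) ltac:(lra)) as G. rewrite gs_even in G.
  set (C := Int (hc be) (- M) M) in *. set (I0 := Int gs (- M) M) in *.
  assert (Ee : exp (be ^ 2 / 2) * exp (- be ^ 2 / 2) = 1) by (rewrite <- exp_plus; replace (be ^ 2 / 2 + - be ^ 2 / 2) with 0 by field; apply exp_0).
  pose proof (exp_pos (- be ^ 2 / 2)) as Hp.
  assert (Hle1 : exp (- be ^ 2 / 2) <= 1) by (rewrite <- exp_0; apply exp_le_exp_le; nra).
  replace (C - sqrt (2 * PI) * exp (- be ^ 2 / 2))
    with (exp (- be ^ 2 / 2) * (exp (be ^ 2 / 2) * C - I0) + exp (- be ^ 2 / 2) * (I0 - sqrt (2 * PI))).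
  2:{ transitivity ((exp (be ^ 2 / 2) * exp (- be ^ 2 / 2)) * C - exp (- be ^ 2 / 2) * sqrt (2 * PI)). ring. rewrite Ee; ring. }
  eapply Rle_trans. apply Rabs_triang. rewrite !Rabs_mult, (Rabs_right (exp (- be ^ 2 / 2))) by lra.
  pose proof rg_pos. pose proof (gs_pos M).
  assert (G' : Rabs (I0 - sqrt (2 * PI)) <= gs M * (4 / rg)) by (eapply Rle_trans; [apply G| right; field; lra]).
  apply Rle_trans with (exp (- be ^ 2 / 2) * (2 * exp (be ^ 2 / 2) * gs M * Rabs be) + 1 * (gs M * (4 / rg))).
  apply Rplus_le_compat. apply Rmult_le_compat_l; lra.
  apply Rmult_le_compat; try lra; apply Rabs_pos.
  replace (exp (- be ^ 2 / 2) * (2 * exp (be ^ 2 / 2) * gs M * Rabs be))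
    with ((exp (be ^ 2 / 2) * exp (- be ^ 2 / 2)) * (2 * gs M * Rabs be)) by ring. rewrite Ee. lra.
Qed.

Lemma IInt_hc be : IInt (hc be) (sqrt (2 * PI) * exp (- be ^ 2 / 2)).
Proof.
  apply IInt_sym. apply hc_cont. apply hc_bnd.
  intros eps Heps. pose proof rg_pos. set (K := 2 * Rabs be + 4 / rg).
  assert (HK : 0 < K) by (unfold K; pose proof (Rabs_pos be); assert (0 < 4 / rg) by (apply Rdiv_lt_0_compat; lra); lra).
  exists (1 + K / eps). intros M HM.
  assert (HKe : 0 < K / eps) by (apply Rdiv_lt_0_compat; lra).
  eapply Rle_lt_trans. apply CM_approx; lra.
  eapply Rle_lt_trans. apply Rmult_le_compat_r. unfold K in HK; lra. apply gs_le_inv; lra.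
  fold K.
  apply Rmult_lt_reg_l with M. lra. rewrite <- Rmult_assoc, Rinv_r, Rmult_1_l by lra.
  assert (K < M * eps). { replace K with (K / eps * eps) by (field; lra). nra. } lra.
Qed.

Lemma IInt_hs be : IInt (hs be) 0.
Proof.
  apply IInt_sym. apply hs_cont. apply hs_bnd.
  intros eps Heps. exists 0. intros M _. rewrite hs_sym, Rminus_0_r, Rabs_R0; auto.
Qed.


Definition fc al be y := exp (- y ^ 2 / 2 + al * y) * cos (be * y).
Definition fs al be y := exp (- y ^ 2 / 2 + al * y) * sin (be * y).
Definition GL al be := sqrt (2 * PI) * exp ((al ^ 2 - be ^ 2) / 2).

Lemma shift_gs al y : exp (- y ^ 2 / 2 + al * y) = exp (al ^ 2 / 2) * gs (y - al).
Proof. unfold gs. rewrite <- exp_plus. f_equal. field. Qed.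

Lemma GL_eq al be : GL al be = exp (al ^ 2 / 2) * (sqrt (2 * PI) * exp (- be ^ 2 / 2)).
Proof. unfold GL. replace ((al ^ 2 - be ^ 2) / 2) with (al ^ 2 / 2 + - be ^ 2 / 2) by field.
  rewrite exp_plus. ring. Qed.

Lemma cont_shift f al : continuity f -> continuity (fun y => f (y - al)).
Proof. intros H x. apply (continuity_pt_comp (fun y => y - al) f). reg. apply H. Qed.

Lemma IInt_fc al be : IInt (fc al be) (GL al be * cos (al * be)).
Proof.
  apply (IInt_ext (fun y => (exp (al^2/2) * cos (al * be)) * hc be (y - al)
                           + (- (exp (al^2/2) * sin (al * be))) * hs be (y - al))).
  - intro y. unfold fc, hc, hs. rewrite shift_gs.
    replace (be * y) with (be * (y - al) + al * be) by ring. rewrite cos_plus. ring.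
  - eapply IInt_eqL. apply (IInt_lin (fun y => hc be (y - al)) (fun y => hs be (y - al))).
    apply cont_shift, hc_cont. apply cont_shift, hs_cont.
    apply IInt_shift. apply hc_cont. apply IInt_hc. apply IInt_shift. apply hs_cont. apply IInt_hs.
    rewrite GL_eq. ring.
Qed.

Lemma IInt_fs al be : IInt (fs al be) (GL al be * sin (al * be)).
Proof.
  apply (IInt_ext (fun y => (exp (al^2/2) * cos (al * be)) * hs be (y - al)
                           + (exp (al^2/2) * sin (al * be)) * hc be (y - al))).
  - intro y. unfold fs, hc, hs. rewrite shift_gs.
    replace (be * y) with (be * (y - al) + al * be) by ring. rewrite sin_plus. ring.
  - eapply IInt_eqL. apply (IInt_lin (fun y => hs be (y - al)) (fun y => hc be (y - al))).
    apply cont_shift, hs_cont. apply cont_shift, hc_cont.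
    apply IInt_shift. apply hs_cont. apply IInt_hs. apply IInt_shift. apply hc_cont. apply IInt_hc.
    rewrite GL_eq. ring.
Qed.

Definition CIInt (F : R -> Cplx) (L : Cplx) : Prop :=
  continuity (fun y => fst (F y)) /\ continuity (fun y => snd (F y)) /\
  IInt (fun y => fst (F y)) (fst L) /\ IInt (fun y => snd (F y)) (snd L).

Lemma CIInt_ext F G L : (forall y, F y = G y) -> CIInt F L -> CIInt G L.
Proof. intros H. replace G with F; auto. apply functional_extensionality; auto. Qed.

Lemma CIInt_eqL F L L' : CIInt F L -> L = L' -> CIInt F L'.
Proof. intros H ->; auto. Qed.

Lemma CIInt_add F G L1 L2 : CIInt F L1 -> CIInt G L2 ->
  CIInt (fun y => Cadd (F y) (G y)) (Cadd L1 L2).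
Proof.
  intros [c1 [c2 [i1 i2]]] [d1 [d2 [j1 j2]]]. unfold Cadd; simpl.
  split; [|split; [|split]].
  - intro; apply continuity_pt_plus; auto.
  - intro; apply continuity_pt_plus; auto.
  - eapply IInt_ext. 2: eapply IInt_eqL. 2: apply (IInt_lin _ _ _ _ 1 1 c1 d1 i1 j1).
    intro; simpl; ring. simpl; ring.
  - eapply IInt_ext. 2: eapply IInt_eqL. 2: apply (IInt_lin _ _ _ _ 1 1 c2 d2 i2 j2).
    intro; simpl; ring. simpl; ring.
Qed.

Lemma IInt_zero : IInt (fun _ => 0) 0.
Proof. intros eps He. exists 0. split. lra. intros. rewrite Int_const. rewrite Rmult_0_l, Rminus_0_r, Rabs_R0; auto. Qed.

Lemma CIInt_zero : CIInt (fun _ => (0, 0)) (0, 0).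
Proof. split; [|split; [|split]]; simpl; try apply cst_cont; apply IInt_zero. Qed.

Lemma CIInt_gauss K al be :
  CIInt (fun y => Cmul K (Cexp (- y ^ 2 / 2 + al * y, be * y)))
        (Cmul K (GL al be * cos (al * be), GL al be * sin (al * be))).
Proof.
  destruct K as [k1 k2]. unfold CIInt, Cmul, Cexp; cbn [fst snd].
  split; [|split; [|split]].
  - reg.
  - reg.
  - eapply IInt_ext. 2: eapply IInt_eqL. 2: apply (IInt_lin (fc al be) (fs al be) (GL al be * cos (al * be)) (GL al be * sin (al * be)) k1 (- k2)); [unfold fc; reg | unfold fs; reg | apply IInt_fc | apply IInt_fs].
    intro; unfold fc, fs; ring. simpl; ring.
  - eapply IInt_ext. 2: eapply IInt_eqL. 2: apply (IInt_lin (fs al be) (fc al be) (GL al be * sin (al * be)) (GL al be * cos (al * be)) k1 k2); [unfold fs; reg | unfold fc; reg | apply IInt_fs | apply IInt_fc].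
    intro; unfold fc, fs; ring. simpl; ring.
Qed.

Lemma CIInt_improper F L : CIInt F L -> improper_integral F L.
Proof.
  intros [c1 [c2 [i1 i2]]]. split.
  - intros a b. split; constructor; apply cont_RI; auto.
  - intros eps Heps. destruct (i1 eps Heps) as [M1 [HM1 B1]]. destruct (i2 eps Heps) as [M2 [HM2 B2]].
    exists (Rmax M1 M2). intros a b pr1 pr2 Ha Hb.
    rewrite (Int_eq _ _ _ pr1), (Int_eq _ _ _ pr2).
    pose proof (Rmax_l M1 M2). pose proof (Rmax_r M1 M2).
    split; [apply B1 | apply B2]; lra.
Qed.


Lemma Ceq (a b : Cplx) : fst a = fst b -> snd a = snd b -> a = b.
Proof. destruct a, b; simpl; intros -> ->; auto. Qed.

Ltac csolve := apply Ceq; unfold Cmul, Cadd, RtoC, Cexp; simpl; ring.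

Lemma Cmul_assoc a b c : Cmul a (Cmul b c) = Cmul (Cmul a b) c.
Proof. csolve. Qed.
Lemma Cmul_comm a b : Cmul a b = Cmul b a.
Proof. csolve. Qed.
Lemma Cmul_Cadd_r a b c : Cmul a (Cadd b c) = Cadd (Cmul a b) (Cmul a c).
Proof. csolve. Qed.
Lemma Cmul_0_r a : Cmul a (0, 0) = (0, 0).
Proof. csolve. Qed.
Lemma Cmul_0_l a : Cmul (0, 0) a = (0, 0).
Proof. csolve. Qed.
Lemma Cmul_RtoC r s : Cmul (RtoC r) (RtoC s) = RtoC (r * s).
Proof. csolve. Qed.

Lemma Cexp_mul a b c d : Cmul (Cexp (a, b)) (Cexp (c, d)) = Cexp (a + c, b + d).
Proof. apply Ceq; unfold Cmul, Cexp; simpl; rewrite ?exp_plus, ?cos_plus, ?sin_plus; ring. Qed.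

Lemma Cpow_mul z w n : Cpow (Cmul z w) n = Cmul (Cpow z n) (Cpow w n).
Proof.
  induction n; simpl. csolve. rewrite IHn.
  rewrite !Cmul_assoc. f_equal. rewrite <- !Cmul_assoc. f_equal. apply Cmul_comm.
Qed.

Lemma Cpow_Cexp0 th n : Cpow (Cexp (0, th)) n = Cexp (0, INR n * th).
Proof.
  induction n; simpl Cpow. apply Ceq; unfold Cexp; simpl; rewrite ?exp_0, ?Rmult_0_l, ?cos_0, ?sin_0; ring.
  rewrite IHn, Cexp_mul. rewrite S_INR. f_equal. f_equal; ring.
Qed.

Lemma Cpow_RtoC r n : Cpow (RtoC r) n = RtoC (r ^ n).
Proof. induction n; simpl. reflexivity. rewrite IHn. apply Cmul_RtoC. Qed.

Definition nrm (z : Cplx) := Rabs (fst z) + Rabs (snd z).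

Lemma nrm_pos z : 0 <= nrm z.
Proof. unfold nrm; pose proof (Rabs_pos (fst z)); pose proof (Rabs_pos (snd z)); lra. Qed.

Lemma nrm_mul z w : nrm (Cmul z w) <= nrm z * nrm w.
Proof.
  destruct z as [a b], w as [c d]. unfold nrm, Cmul; simpl.
  eapply Rle_trans. apply Rplus_le_compat; apply Rabs_triang.
  rewrite Rabs_Ropp, !Rabs_mult.
  pose proof (Rabs_pos a); pose proof (Rabs_pos b); pose proof (Rabs_pos c); pose proof (Rabs_pos d). nra.
Qed.

Lemma nrm_pow z n : nrm (Cpow z n) <= nrm z ^ n.
Proof.
  induction n; simpl. unfold nrm; simpl. rewrite Rabs_R1, Rabs_R0; lra.
  eapply Rle_trans. apply nrm_mul. apply Rmult_le_compat_l. apply nrm_pos. auto.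
Qed.

Lemma nrm_RtoC r : nrm (RtoC r) = Rabs r.
Proof. unfold nrm, RtoC; simpl. rewrite Rabs_R0; ring. Qed.

Lemma nrm_Cexp a b : nrm (Cexp (a, b)) <= 2 * exp a.
Proof.
  unfold nrm, Cexp; simpl. rewrite !Rabs_mult, Rabs_right by (left; apply exp_pos).
  pose proof (COS_bound b); pose proof (SIN_bound b). pose proof (exp_pos a).
  assert (Rabs (cos b) <= 1) by (apply Rabs_le; lra). assert (Rabs (sin b) <= 1) by (apply Rabs_le; lra).
  nra.
Qed.

Lemma nrm_sub w P : nrm (Cadd w (Cmul (RtoC (-1)) P)) = Rabs (fst w - fst P) + Rabs (snd w - snd P).
Proof. destruct w, P; unfold nrm, Cadd, Cmul, RtoC; simpl. f_equal; f_equal; ring. Qed.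

Fixpoint ps (f : nat -> R) (N : nat) : R :=
  match N with O => 0 | S m => ps f m + f m end.

Lemma ps_sum f N : ps f (S N) = sum_f_R0 f N.
Proof. induction N; simpl. ring. simpl in IHN. rewrite <- IHN. ring. Qed.

Lemma ps_cv f l : Un_cv (sum_f_R0 f) l -> Un_cv (ps f) l.
Proof.
  intros H eps He. destruct (H eps He) as [N HN]. exists (S N). intros n Hn.
  destruct n. lia. rewrite ps_sum. apply HN. lia.
Qed.

Lemma ps_diff_bound (u1 u2 b : nat -> R) N k : (forall n, Rabs (u1 n) + Rabs (u2 n) <= b n) ->
  Rabs (ps u1 (N + k)%nat - ps u1 N) + Rabs (ps u2 (N + k)%nat - ps u2 N) <= ps b (N + k)%nat - ps b N.
Proof.
  intro H. induction k. rewrite Nat.add_0_r, !Rminus_diag, Rabs_R0. lra.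
  replace (N + S k)%nat with (S (N + k)%nat) by lia. simpl.
  replace (ps u1 (N + k)%nat + u1 (N + k)%nat - ps u1 N) with ((ps u1 (N + k)%nat - ps u1 N) + u1 (N + k)%nat) by ring.
  replace (ps u2 (N + k)%nat + u2 (N + k)%nat - ps u2 N) with ((ps u2 (N + k)%nat - ps u2 N) + u2 (N + k)%nat) by ring.
  pose proof (Rabs_triang (ps u1 (N + k)%nat - ps u1 N) (u1 (N + k)%nat)).
  pose proof (Rabs_triang (ps u2 (N + k)%nat - ps u2 N) (u2 (N + k)%nat)).
  specialize (H (N + k)%nat). lra.
Qed.

Lemma ps_diff1 (u b : nat -> R) N k : (forall n, Rabs (u n) <= b n) ->
  Rabs (ps u (N + k) - ps u N) <= ps b (N + k) - ps b N.
Proof.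
  intro H. induction k. rewrite Nat.add_0_r, !Rminus_diag, Rabs_R0. lra.
  replace (N + S k)%nat with (S (N + k)) by lia. simpl.
  replace (ps u (N + k)%nat + u (N + k)%nat - ps u N) with ((ps u (N + k)%nat - ps u N) + u (N + k)%nat) by ring.
  pose proof (Rabs_triang (ps u (N + k)%nat - ps u N) (u (N + k)%nat)).
  specialize (H (N + k)%nat). lra.
Qed.

Lemma cauchy_dom (u b : nat -> R) : (forall n, Rabs (u n) <= b n) -> Cauchy_crit (ps b) -> Cauchy_crit (ps u).
Proof.
  intros H Hc eps He. destruct (Hc eps He) as [N HN]. exists N. intros n m Hn Hm.
  unfold R_dist in *.
  assert (G : forall n m, (N <= n)%nat -> (n <= m)%nat -> Rabs (ps u m - ps u n) < eps).
  { intros n0 m0 H1 H2. replace m0 with (n0 + (m0 - n0))%nat by lia.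
    pose proof (ps_diff1 u b n0 (m0 - n0) H) as H0.
    specialize (HN (n0 + (m0 - n0))%nat n0 ltac:(lia) ltac:(lia)).
    eapply Rle_lt_trans. apply H0. eapply Rle_lt_trans. apply Rle_abs. auto. }
  destruct (Nat.le_ge_cases n m).
  - rewrite <- Rabs_Ropp. replace (- (ps u n - ps u m)) with (ps u m - ps u n) by ring. apply G; auto.
  - apply G; auto.
Qed.

Lemma series_tail (u1 u2 b : nat -> R) B : (forall n, Rabs (u1 n) + Rabs (u2 n) <= b n) ->
  Un_cv (ps b) B ->
  exists w1 w2, Un_cv (ps u1) w1 /\ Un_cv (ps u2) w2 /\
    forall N, Rabs (w1 - ps u1 N) + Rabs (w2 - ps u2 N) <= B - ps b N.
Proof.
  intros H HB.
  assert (Hc : Cauchy_crit (ps b)) by (apply CV_Cauchy; exists B; auto).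
  destruct (R_complete _ (cauchy_dom u1 b ltac:(intro n; pose proof (H n); pose proof (Rabs_pos (u2 n)); lra) Hc)) as [w1 H1].
  destruct (R_complete _ (cauchy_dom u2 b ltac:(intro n; pose proof (H n); pose proof (Rabs_pos (u1 n)); lra) Hc)) as [w2 H2].
  exists w1, w2. split; auto. split; auto. intro N.
  apply le_epsilon. intros eps He.
  destruct (H1 (eps/3) ltac:(lra)) as [N1 HN1]. destruct (H2 (eps/3) ltac:(lra)) as [N2 HN2].
  destruct (HB (eps/3) ltac:(lra)) as [N3 HN3].
  set (M := (N + N1 + N2 + N3)%nat).
  specialize (HN1 M ltac:(unfold M; lia)). specialize (HN2 M ltac:(unfold M; lia)).
  specialize (HN3 M ltac:(unfold M; lia)). unfold R_dist in *.
  pose proof (ps_diff_bound u1 u2 b N (M - N) H) as D. replace (N + (M - N))%nat with M in D by (unfold M; lia).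
  replace (w1 - ps u1 N) with ((w1 - ps u1 M) + (ps u1 M - ps u1 N)) by ring.
  replace (w2 - ps u2 N) with ((w2 - ps u2 M) + (ps u2 M - ps u2 N)) by ring.
  pose proof (Rabs_triang (w1 - ps u1 M) (ps u1 M - ps u1 N)).
  pose proof (Rabs_triang (w2 - ps u2 M) (ps u2 M - ps u2 N)).
  rewrite <- Rabs_Ropp in HN1, HN2. rewrite Ropp_minus_distr in HN1, HN2.
  apply Rabs_def2 in HN3. lra.
Qed.

Lemma Eexp_eq zeta p q z w : Eseries_sum zeta p q z w -> Eexp zeta p q z = w.
Proof.
  intro H. unfold Eexp.
  pose proof (epsilon_spec (inhabits (0, 0)) (fun w => Eseries_sum zeta p q z w) (ex_intro _ w H)) as S.
  set (e := epsilon _ _) in *. destruct H as [H1 H2], S as [S1 S2].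
  apply Ceq. eapply UL_sequence; eauto. eapply UL_sequence; eauto.
Qed.

Lemma Epartial_fst zeta p q z N :
  fst (Epartial zeta p q z N) = ps (fun n => fst (Cmul (RtoC (Ecoef zeta p q n)) (Cpow z n))) N.
Proof. induction N; simpl; auto. rewrite IHN; auto. Qed.
Lemma Epartial_snd zeta p q z N :
  snd (Epartial zeta p q z N) = ps (fun n => snd (Cmul (RtoC (Ecoef zeta p q n)) (Cpow z n))) N.
Proof. induction N; simpl; auto. rewrite IHN; auto. Qed.

Lemma E_conv zeta p q z (b : nat -> R) B :
  (forall n, Rabs (Ecoef zeta p q n) * nrm z ^ n <= b n) -> Un_cv (ps b) B ->
  Econv zeta p q z /\
  forall N, nrm (Cadd (Eexp zeta p q z) (Cmul (RtoC (-1)) (Epartial zeta p q z N))) <= B - ps b N.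
Proof.
  intros Hb HB.
  destruct (series_tail (fun n => fst (Cmul (RtoC (Ecoef zeta p q n)) (Cpow z n)))
                        (fun n => snd (Cmul (RtoC (Ecoef zeta p q n)) (Cpow z n))) b B) as [w1 [w2 [H1 [H2 H3]]]]; auto.
  { intro n. fold (nrm (Cmul (RtoC (Ecoef zeta p q n)) (Cpow z n))). eapply Rle_trans. apply nrm_mul.
    rewrite nrm_RtoC. eapply Rle_trans. 2: apply Hb. apply Rmult_le_compat_l. apply Rabs_pos. apply nrm_pow. }
  assert (ES : Eseries_sum zeta p q z (w1, w2)).
  { split; simpl; eapply Un_cv_ext; try eassumption; intro; simpl;
      [rewrite Epartial_fst | rewrite Epartial_snd]; auto. }
  split. exists (w1, w2); auto.
  intro N. rewrite (Eexp_eq _ _ _ _ _ ES), nrm_sub. simpl fst; simpl snd.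
  rewrite Epartial_fst, Epartial_snd. apply H3.
Qed.


Lemma abs3 a b c : Rabs (a + b + c) <= Rabs a + Rabs b + Rabs c.
Proof. eapply Rle_trans. apply Rabs_triang. pose proof (Rabs_triang a b). lra. Qed.

Lemma cont_of_eps f x : (forall eps, 0 < eps -> exists d, 0 < d /\ forall y, Rabs (y - x) < d -> Rabs (f y - f x) < eps) ->
  continuity_pt f x.
Proof.
  intros H eps He. destruct (H eps He) as [d [Hd Hy]]. exists d. split; auto.
  intros y [_ Hy']. simpl in *. unfold R_dist in *. apply Hy; auto.
Qed.

Lemma eps_of_cont f x : continuity_pt f x -> forall eps, 0 < eps -> exists d, 0 < d /\ forall y, Rabs (y - x) < d -> Rabs (f y - f x) < eps.
Proof.
  intros H eps He. destruct (H eps He) as [d [Hd Hy]]. exists d. split; auto.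
  intros y Hyx. destruct (Req_dec y x) as [->|Hne]. rewrite Rminus_diag, Rabs_R0; auto.
  apply (Hy y). split. split. exact I. intro E; apply Hne; auto. simpl; unfold R_dist; auto.
Qed.

Lemma unif_cont f (g : nat -> R -> R) e : (forall N, continuity (g N)) -> Un_cv e 0 ->
  (forall N y, Rabs (f y - g N y) <= e N) -> continuity f.
Proof.
  intros Hg He Hb x. apply cont_of_eps. intros eps Heps.
  destruct (He (eps/3) ltac:(lra)) as [N HN]. specialize (HN N (le_n N)). unfold R_dist in HN.
  rewrite Rminus_0_r in HN.
  destruct (eps_of_cont _ _ (Hg N x) (eps/3) ltac:(lra)) as [d [Hd Hy]].
  exists d. split; auto. intros y Hyx. specialize (Hy y Hyx).
  pose proof (Hb N y). pose proof (Hb N x). pose proof (Rle_abs (e N)).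
  replace (f y - f x) with ((f y - g N y) + (g N y - g N x) + (- (f x - g N x))) by ring.
  eapply Rle_lt_trans. apply abs3. rewrite Rabs_Ropp. lra.
Qed.

Lemma Int_weight a b : a <= b -> Int (fun y => / (1 + y ^ 2)) a b <= PI.
Proof.
  intro Hab. rewrite (FTC atan). pose proof (atan_bound a); pose proof (atan_bound b). lra.
  apply D_atan. intro y; apply continuity_pt_inv. reg. pose proof (one_x2 y); lra.
Qed.

Lemma weight_cont : continuity (fun y => / (1 + y ^ 2)).
Proof. intro y; apply continuity_pt_inv. reg. pose proof (one_x2 y); lra. Qed.

Lemma approx_R f (g : nat -> R -> R) Ls L e : continuity f -> (forall N, continuity (g N)) ->
  (forall N, IInt (g N) (Ls N)) -> Un_cv Ls L -> Un_cv e 0 ->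
  (forall N y, Rabs (f y - g N y) <= e N * / (1 + y ^ 2)) -> IInt f L.
Proof.
  intros Hf Hg HI HL He Hb eps Heps.
  pose proof PI_RGT_0.
  destruct (He (eps / (3 * PI)) ltac:(apply Rdiv_lt_0_compat; lra)) as [N1 HN1].
  destruct (HL (eps/3) ltac:(lra)) as [N2 HN2].
  set (N := (N1 + N2)%nat). specialize (HN1 N ltac:(unfold N; lia)). specialize (HN2 N ltac:(unfold N; lia)).
  unfold R_dist in HN1, HN2. rewrite Rminus_0_r in HN1.
  destruct (HI N (eps/3) ltac:(lra)) as [M [HM HB]].
  exists M. split; auto. intros a b Ha Hb'. specialize (HB a b Ha Hb').
  assert (Hab : a <= b) by lra.
  replace (Int f a b - L) with (Int (fun y => f y - g N y) a b + (Int (g N) a b - Ls N) + (Ls N - L))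
    by (rewrite Int_minus; auto; ring).
  eapply Rle_lt_trans. apply abs3.
  assert (B1 : Rabs (Int (fun y => f y - g N y) a b) <= Rabs (e N) * PI).
  { assert (C1 : continuity (fun y => f y - g N y)) by (intro x; apply continuity_pt_minus; [apply Hf | apply Hg]).
    assert (C2 : continuity (fun y => Rabs (e N) * / (1 + y^2))).
    { intro y; apply continuity_pt_mult. apply continuity_pt_const; intros ? ?; auto. apply weight_cont. }
    assert (Hbd : forall y, a <= y <= b -> Rabs (f y - g N y) <= Rabs (e N) * / (1 + y^2)).
    { intros y _. eapply Rle_trans. apply Hb. apply Rmult_le_compat_r. left; apply Rinv_0_lt_compat, one_x2. apply Rle_abs. }
    eapply Rle_trans. apply (Int_abs_le _ _ a b C1 C2 Hab Hbd).
    rewrite Int_scal by apply weight_cont. apply Rmult_le_compat_l. apply Rabs_pos. apply Int_weight; auto. }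
  assert (Rabs (e N) * PI < eps / 3).
  { apply Rlt_le_trans with (eps / (3 * PI) * PI). apply Rmult_lt_compat_r; auto. right; field; lra. }
  lra.
Qed.

Lemma approx_C (F : R -> Cplx) (g : nat -> R -> Cplx) (Ls : nat -> Cplx) (L : Cplx) (e : nat -> R) :
  (forall N, CIInt (g N) (Ls N)) ->
  Un_cv (fun N => fst (Ls N)) (fst L) -> Un_cv (fun N => snd (Ls N)) (snd L) ->
  Un_cv e 0 ->
  (forall N y, Rabs (fst (F y) - fst (g N y)) + Rabs (snd (F y) - snd (g N y)) <= e N * / (1 + y ^ 2)) ->
  CIInt F L.
Proof.
  intros HI H1 H2 He Hb.
  assert (Hb1 : forall N y, Rabs (fst (F y) - fst (g N y)) <= e N * / (1 + y ^ 2)).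
  { intros N y. pose proof (Hb N y). pose proof (Rabs_pos (snd (F y) - snd (g N y))). lra. }
  assert (Hb2 : forall N y, Rabs (snd (F y) - snd (g N y)) <= e N * / (1 + y ^ 2)).
  { intros N y. pose proof (Hb N y). pose proof (Rabs_pos (fst (F y) - fst (g N y))). lra. }
  assert (Hw : forall N y, e N * / (1 + y ^ 2) <= e N).
  { intros N y. assert (0 <= e N).
    { pose proof (Hb1 N y). pose proof (Rabs_pos (fst (F y) - fst (g N y))).
      assert (0 < / (1 + y^2)) by (apply Rinv_0_lt_compat, one_x2). nra. }
    assert (/ (1 + y^2) <= 1) by (rewrite <- Rinv_1; apply Rinv_le_contravar; [lra| pose proof (pow2_ge_0 y); lra]).
    nra. }
  assert (C1 : continuity (fun y => fst (F y))).
  { apply (unif_cont _ (fun N y => fst (g N y)) e); auto. intro N; apply (HI N).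
    intros; eapply Rle_trans; [apply Hb1| apply Hw]. }
  assert (C2 : continuity (fun y => snd (F y))).
  { apply (unif_cont _ (fun N y => snd (g N y)) e); auto. intro N; apply (HI N).
    intros; eapply Rle_trans; [apply Hb2| apply Hw]. }
  split; auto. split; auto. split.
  - apply (approx_R _ (fun N y => fst (g N y)) (fun N => fst (Ls N)) _ e); auto.
    intro N; apply (HI N). intro N; apply (HI N).
  - apply (approx_R _ (fun N y => snd (g N y)) (fun N => snd (Ls N)) _ e); auto.
    intro N; apply (HI N). intro N; apply (HI N).
Qed.


Lemma exp_INR_pow a n : exp (INR n * a) = exp a ^ n.
Proof.
  induction n. simpl. rewrite Rmult_0_l; apply exp_0.
  rewrite S_INR. replace ((INR n + 1) * a) with (INR n * a + a) by ring.
  rewrite exp_plus, IHn. simpl; ring.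
Qed.

Lemma INR_sq n : INR n ^ 2 = INR (n * n).
Proof. rewrite mult_INR; ring. Qed.

Lemma pqbr_pos p q n : 0 < p -> 0 < q -> p * q < 1 -> 0 < pqbr p q n.
Proof.
  intros hp hq hpq. induction n. simpl; lra.
  change (pqbr p q (S n)) with (pqbr p q n * (/ p ^ S n - q ^ S n)).
  apply Rmult_lt_0_compat; auto.
  assert (q ^ S n * p ^ S n < 1).
  { rewrite <- Rpow_mult_distr. replace (q * p) with (p * q) by ring.
    apply pow_lt_1_compat. split; nra. lia. }
  assert (0 < p ^ S n) by (apply pow_lt; auto).
  apply Rmult_lt_reg_r with (p ^ S n); auto. rewrite Rmult_minus_distr_r, Rinv_l by lra. lra.
Qed.

Lemma pqbr_lower p q n : 0 < p -> 0 < q -> p * q < 1 ->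
  (1 - p * q) ^ n <= pqbr p q n * sqrt p ^ (n * n + n).
Proof.
  intros hp hq hpq. induction n. simpl; lra.
  change (pqbr p q (S n)) with (pqbr p q n * (/ p ^ S n - q ^ S n)).
  replace (S n * S n + S n)%nat with ((n * n + n) + (S n + S n))%nat by lia.
  rewrite pow_add. replace (S n + S n)%nat with (2 * S n)%nat by lia.
  rewrite pow_mult. replace (sqrt p ^ 2) with p by (simpl; rewrite Rmult_1_r, sqrt_sqrt; lra).
  assert (E : (/ p ^ S n - q ^ S n) * p ^ S n = 1 - (p * q) ^ S n).
  { rewrite Rpow_mult_distr. field. apply pow_nonzero; lra. }
  assert (Hle : (p * q) ^ S n <= p * q).
  { simpl. apply Rle_trans with (p * q * 1). apply Rmult_le_compat_l. nra.
    rewrite <- (pow1 n). apply pow_incr. split; nra. lra. }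
  pose proof (pqbr_pos p q n hp hq hpq).
  assert (0 <= 1 - p * q) by lra.
  replace (pqbr p q n * (/ p ^ S n - q ^ S n) * (sqrt p ^ (n * n + n) * p ^ S n))
    with ((pqbr p q n * sqrt p ^ (n * n + n)) * ((/ p ^ S n - q ^ S n) * p ^ S n)) by ring.
  rewrite E. replace ((1 - p * q) ^ S n) with ((1 - p * q) ^ n * (1 - p * q)) by (simpl; ring). apply Rmult_le_compat; auto. apply pow_le; auto. lra.
Qed.

Lemma Ecoef_formula p k q zeta n : 0 < p -> q = p * exp (- 2 * k ^ 2) ->
  Ecoef zeta p q n = exp (- zeta * k ^ 2) ^ (n * n) / pqbr p q n.
Proof.
  intros hp hq. unfold Ecoef, Rpower. subst q.
  replace (p * exp (- 2 * k ^ 2) / p) with (exp (- 2 * k ^ 2)) by (field; lra).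
  rewrite ln_exp, <- exp_INR_pow, <- INR_sq. f_equal. f_equal. field.
Qed.

Lemma Ecoef_major p k q zeta nz n : 0 < p -> q = p * exp (- 2 * k ^ 2) -> 0 < p * q -> p * q < 1 -> 0 <= nz ->
  0 <= Rabs (Ecoef zeta p q n) * nz ^ n <=
  (sqrt p * nz / (1 - p * q)) ^ n * (sqrt p * exp (- zeta * k ^ 2)) ^ (n * n).
Proof.
  intros hp hq h0 h1 hnz. split. apply Rmult_le_pos. apply Rabs_pos. apply pow_le; auto.
  assert (hq0 : 0 < q) by (subst q; apply Rmult_lt_0_compat; auto; apply exp_pos).
  rewrite (Ecoef_formula p k q zeta n hp hq).
  pose proof (pqbr_pos p q n hp hq0 h1). pose proof (pqbr_lower p q n hp hq0 h1).
  rewrite Rabs_right. 2:{ left; apply Rdiv_lt_0_compat; auto. apply pow_lt, exp_pos. }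
  set (E := exp (- zeta * k ^ 2)). assert (0 < E) by apply exp_pos.
  set (s := sqrt p). assert (0 < s) by (apply sqrt_lt_R0; auto).
  assert (0 < 1 - p * q) by lra.
  rewrite !Rpow_mult_distr. unfold Rdiv. rewrite !Rpow_mult_distr, pow_inv.
  assert (0 < (1 - p * q) ^ n) by (apply pow_lt; auto).
  assert (0 < E ^ (n * n)) by (apply pow_lt; auto).
  assert (0 <= nz ^ n) by (apply pow_le; auto).
  rewrite pow_add in H0.
  assert (I : / pqbr p q n <= s ^ (n * n) * s ^ n * / (1 - p * q) ^ n).
  { apply Rmult_le_reg_l with (pqbr p q n); auto. rewrite Rinv_r by lra.
    apply Rmult_le_reg_r with ((1 - p * q) ^ n); auto.
    replace (pqbr p q n * (s ^ (n * n) * s ^ n * / (1 - p * q) ^ n) * (1 - p * q) ^ n)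
      with (pqbr p q n * (s ^ (n * n) * s ^ n)) by (field; lra). unfold s; lra. }
  replace (s ^ n * nz ^ n * / (1 - p * q) ^ n * (s ^ (n * n) * E ^ (n * n)))
    with (E ^ (n * n) * (s ^ (n * n) * s ^ n * / (1 - p * q) ^ n) * nz ^ n) by ring.
  apply Rmult_le_compat_r; auto. apply Rmult_le_compat_l; lra.
Qed.

Lemma ps_cv_inv f l : Un_cv (ps f) l -> Un_cv (sum_f_R0 f) l.
Proof.
  intros H eps He. destruct (H eps He) as [N HN]. exists N. intros n Hn.
  rewrite <- ps_sum. apply HN. lia.
Qed.

Lemma sum_major (b : nat -> R) A rho : 0 <= A -> 0 < rho < 1 ->
  (forall n, 0 <= b n <= A ^ n * rho ^ (n * n)) -> exists B, Un_cv (ps b) B.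
Proof.
  intros hA hr hb.
  assert (C : {l | Un_cv (sum_f_R0 (fun n => (A + 1) ^ n * rho ^ (n * n))) l}).
  { apply Alembert_C1. intro; apply Rmult_lt_0_compat; apply pow_lt; lra.
    intros eps He. destruct (pow_lt_1_zero rho ltac:(rewrite Rabs_right; lra) (eps / (A + 1)) ltac:(apply Rdiv_lt_0_compat; lra)) as [N HN].
    exists N. intros n Hn. unfold R_dist. rewrite Rminus_0_r, Rabs_Rabsolu.
    replace ((A + 1) ^ S n * rho ^ (S n * S n) / ((A + 1) ^ n * rho ^ (n * n)))
      with ((A + 1) * rho ^ (S (2 * n))).
    2:{ replace (S n * S n)%nat with (n * n + S (2 * n))%nat by lia. rewrite pow_add. simpl.
        field. split; apply pow_nonzero; lra. }
    specialize (HN (S (2 * n)) ltac:(lia)).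
    rewrite Rabs_mult, (Rabs_right (A + 1)) by lra.
    apply Rmult_lt_reg_l with (/ (A + 1)). apply Rinv_0_lt_compat; lra.
    rewrite <- Rmult_assoc, Rinv_l, Rmult_1_l by lra. unfold Rdiv in HN. lra. }
  destruct (Rseries_CV_comp b _ (fun n => conj (proj1 (hb n))
     (Rle_trans _ _ _ (proj2 (hb n)) (Rmult_le_compat_r _ _ _ (pow_le _ _ (Rlt_le _ _ (proj1 hr))) (pow_incr A (A + 1) n ltac:(lra)))))
     C) as [B HB].
  exists B. apply ps_cv; auto.
Qed.

Lemma ps_scal c f N : ps (fun n => c * f n) N = c * ps f N.
Proof. induction N; simpl. ring. rewrite IHN; ring. Qed.

Lemma cv_scal c u l : Un_cv u l -> Un_cv (fun n => c * u n) (c * l).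
Proof.
  intros H. apply (CV_mult (fun _ => c) u c l); auto.
  intros eps He. exists O. intros; unfold R_dist; rewrite Rminus_diag, Rabs_R0; auto.
Qed.

Lemma E_lim zeta p q z : Econv zeta p q z ->
  Un_cv (fun N => fst (Epartial zeta p q z N)) (fst (Eexp zeta p q z)) /\
  Un_cv (fun N => snd (Epartial zeta p q z N)) (snd (Eexp zeta p q z)).
Proof. intros [w Hw]. rewrite (Eexp_eq _ _ _ _ _ Hw). apply Hw. Qed.


Lemma gauss_weight d y : 0 < d -> exp (- d * y ^ 2) <= (1 + / d) * / (1 + y ^ 2).
Proof.
  intro Hd. pose proof (exp_ineq1_le (d * y ^ 2)). pose proof (pow2_ge_0 y).
  replace (- d * y ^ 2) with (- (d * y ^ 2)) by ring. rewrite exp_Ropp.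
  assert (0 < 1 + d * y ^ 2) by nra. pose proof (one_x2 y).
  apply Rle_trans with (/ (1 + d * y ^ 2)). apply Rinv_le_contravar; lra.
  assert (0 < / d) by (apply Rinv_0_lt_compat; auto).
  assert (E : (1 + / d) * / (1 + y^2) = / (1 + d*y^2) * ((1 + d*y^2 + /d + y^2) / (1 + y^2))) by (field; split; lra).
  rewrite E. rewrite <- (Rmult_1_r (/(1 + d * y^2))) at 1. apply Rmult_le_compat_l.
  left; apply Rinv_0_lt_compat; lra.
  apply Rmult_le_reg_r with (1 + y^2); auto. unfold Rdiv. rewrite Rmult_assoc, Rinv_l, Rmult_1_r by lra.
  nra.
Qed.

Lemma nrm_mul_RtoC t r : nrm (Cmul t (RtoC r)) <= nrm t * Rabs r.
Proof. rewrite <- nrm_RtoC. apply nrm_mul. Qed.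

Lemma Econv_gen p k q zeta z : 0 < p -> q = p * exp (- 2 * k ^ 2) -> 0 < p * q -> p * q < 1 ->
  0 < sqrt p * exp (- zeta * k ^ 2) < 1 -> Econv zeta p q z.
Proof.
  intros hp hq h0 h1 hr.
  destruct (sum_major (fun n => Rabs (Ecoef zeta p q n) * nrm z ^ n) (sqrt p * nrm z / (1 - p * q))
     (sqrt p * exp (- zeta * k ^ 2))) as [B HB]; auto.
  { apply Rmult_le_pos. apply Rmult_le_pos. apply sqrt_pos. apply nrm_pos. left; apply Rinv_0_lt_compat; lra. }
  { intro n. apply (Ecoef_major p k q zeta); auto. apply nrm_pos. }
  apply (E_conv zeta p q z (fun n => Rabs (Ecoef zeta p q n) * nrm z ^ n) B); auto. intro; lra.
Qed.

Lemma Ls_cv zeta p q z0 c : Econv zeta p q z0 ->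
  Un_cv (fun N => fst (Cmul (Epartial zeta p q z0 N) (RtoC c))) (fst (Cmul (Eexp zeta p q z0) (RtoC c))) /\
  Un_cv (fun N => snd (Cmul (Epartial zeta p q z0 N) (RtoC c))) (snd (Cmul (Eexp zeta p q z0) (RtoC c))).
Proof.
  intro H. destruct (E_lim _ _ _ _ H) as [H1 H2]. split.
  - replace (fst (Cmul (Eexp zeta p q z0) (RtoC c))) with (c * fst (Eexp zeta p q z0)) by (unfold Cmul, RtoC; simpl; ring).
    apply (Un_cv_ext (fun N => c * fst (Epartial zeta p q z0 N))). intro; unfold Cmul, RtoC; simpl; ring.
    apply cv_scal; auto.
  - replace (snd (Cmul (Eexp zeta p q z0) (RtoC c))) with (c * snd (Eexp zeta p q z0)) by (unfold Cmul, RtoC; simpl; ring).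
    apply (Un_cv_ext (fun N => c * snd (Epartial zeta p q z0 N))). intro; unfold Cmul, RtoC; simpl; ring.
    apply cv_scal; auto.
Qed.

Lemma ps_mono b N k : (forall n, 0 <= b n) -> ps b N <= ps b (N + k).
Proof. intro H. induction k. rewrite Nat.add_0_r; lra. replace (N + S k)%nat with (S (N + k)) by lia.
  simpl. specialize (H (N + k)%nat). lra. Qed.

Lemma ps_le_lim b B N : (forall n, 0 <= b n) -> Un_cv (ps b) B -> ps b N <= B.
Proof.
  intros H HB. destruct (Rle_dec (ps b N) B) as [|Hn]; auto. exfalso.
  destruct (HB (ps b N - B) ltac:(lra)) as [M HM]. specialize (HM (N + M)%nat ltac:(lia)).
  unfold R_dist in HM. pose proof (ps_mono b N M H). apply Rabs_def2 in HM. lra.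
Qed.

Lemma cv_tail bh Bh c : Un_cv (ps bh) Bh -> Un_cv (fun N => c * (Bh - ps bh N)) 0.
Proof.
  intro H. replace 0 with (c * (Bh - Bh)) by ring. apply cv_scal.
  apply (CV_minus (fun _ => Bh)). intros eps He; exists O; intros; unfold R_dist; rewrite Rminus_diag, Rabs_R0; auto. auto.
Qed.

Lemma assembly p q zeta x (z : R -> Cplx) (bh : nat -> R) Bh (mu : R -> R) C (Ls : nat -> Cplx) L :
  Un_cv (ps bh) Bh -> (forall n, 0 <= bh n) -> (forall y, 0 <= mu y) ->
  (forall y n, Rabs (Ecoef zeta p q n) * nrm (z y) ^ n <= mu y * bh n) ->
  (forall y, 2 * exp (- y ^ 2 / 2) * mu y <= C * / (1 + y ^ 2)) ->
  (forall N, CIInt (fun y => Cmul (RtoC (/ sqrt (2 * PI))) (Cmul (Cexp (- y ^ 2 / 2, x * y)) (Epartial zeta p q (z y) N))) (Ls N)) ->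
  Un_cv (fun N => fst (Ls N)) (fst L) -> Un_cv (fun N => snd (Ls N)) (snd L) ->
  (forall y, Econv zeta p q (z y)) /\ CIInt (fun y => Cmul (RtoC (/ sqrt (2 * PI))) (Cmul (Cexp (- y ^ 2 / 2, x * y)) (Eexp zeta p q (z y)))) L.
Proof.
  intros HB Hbh Hmu Hmaj Hw HI H1 H2.
  assert (HE : forall y, Econv zeta p q (z y) /\ forall N, nrm (Cadd (Eexp zeta p q (z y)) (Cmul (RtoC (-1)) (Epartial zeta p q (z y) N))) <= mu y * Bh - ps (fun n => mu y * bh n) N).
  { intro y. apply E_conv. apply Hmaj. eapply Un_cv_ext. intro; symmetry; apply ps_scal. apply cv_scal; auto. }
  split. intro y; apply (HE y).
  assert (Hs : 0 < / sqrt (2 * PI)) by (apply Rinv_0_lt_compat, sqrt_lt_R0; pose proof PI_RGT_0; lra).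
  apply (approx_C _ (fun N y => Cmul (RtoC (/ sqrt (2 * PI))) (Cmul (Cexp (- y ^ 2 / 2, x * y)) (Epartial zeta p q (z y) N))) Ls L (fun N => / sqrt (2 * PI) * C * (Bh - ps bh N))); auto.
  apply cv_tail; auto.
  intros N y. rewrite <- (nrm_sub (Cmul _ _)).
  replace (Cadd (Cmul (RtoC (/ sqrt (2 * PI))) (Cmul (Cexp (- y ^ 2 / 2, x * y)) (Eexp zeta p q (z y))))
     (Cmul (RtoC (-1)) (Cmul (RtoC (/ sqrt (2 * PI))) (Cmul (Cexp (- y ^ 2 / 2, x * y)) (Epartial zeta p q (z y) N)))))
    with (Cmul (RtoC (/ sqrt (2 * PI))) (Cmul (Cexp (- y ^ 2 / 2, x * y))
       (Cadd (Eexp zeta p q (z y)) (Cmul (RtoC (-1)) (Epartial zeta p q (z y) N))))) by csolve.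
  destruct (HE y) as [_ HT]. specialize (HT N). rewrite ps_scal in HT.
  eapply Rle_trans. apply nrm_mul. rewrite nrm_RtoC, Rabs_right by lra.
  assert (HD : 0 <= Bh - ps bh N) by (pose proof (ps_le_lim bh Bh N Hbh HB); lra).
  pose proof (Hw y) as Hwy. pose proof (Hmu y).
  eapply Rle_trans. apply Rmult_le_compat_l. lra. apply nrm_mul.
  eapply Rle_trans. apply Rmult_le_compat_l. lra. apply Rmult_le_compat_r. apply nrm_pos. apply nrm_Cexp.
  eapply Rle_trans. apply Rmult_le_compat_l. lra. apply Rmult_le_compat_l.
  pose proof (exp_pos (- y ^ 2 / 2)); lra. apply HT.
  replace (mu y * Bh - mu y * ps bh N) with (mu y * (Bh - ps bh N)) by ring.
  replace (/ sqrt (2 * PI) * C * (Bh - ps bh N) * / (1 + y ^ 2))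
    with (/ sqrt (2 * PI) * ((C * / (1 + y ^ 2)) * (Bh - ps bh N))) by ring.
  apply Rmult_le_compat_l. lra.
  replace (2 * exp (- y ^ 2 / 2) * (mu y * (Bh - ps bh N))) with ((2 * exp (- y ^ 2 / 2) * mu y) * (Bh - ps bh N)) by ring.
  apply Rmult_le_compat_r; auto.
Qed.


Lemma Epartial_S zeta p q z N :
  Epartial zeta p q z (S N) = Cadd (Epartial zeta p q z N) (Cmul (RtoC (Ecoef zeta p q N)) (Cpow z N)).
Proof. reflexivity. Qed.

Lemma RtoC_exp c : RtoC (exp c) = Cexp (c, 0).
Proof. apply Ceq; unfold RtoC, Cexp; simpl; rewrite ?cos_0, ?sin_0; ring. Qed.

Lemma sqrt2pi_pos : 0 < sqrt (2 * PI).
Proof. apply sqrt_lt_R0. pose proof PI_RGT_0; lra. Qed.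

Lemma coef_a p k q zeta x N : 0 < p -> q = p * exp (- 2 * k ^ 2) -> 0 < p * q -> p * q < 1 ->
  / sqrt (2 * PI) * Ecoef zeta p q N * GL 0 (x + k * INR N) =
  Ecoef (zeta + 1 / 2) p q N * exp (- k * x) ^ N * exp (- x ^ 2 / 2).
Proof.
  intros hp hq h0 h1. assert (hq0 : 0 < q) by (subst q; apply Rmult_lt_0_compat; auto; apply exp_pos).
  rewrite !(Ecoef_formula p k q) by auto. unfold GL.
  rewrite <- !exp_INR_pow, mult_INR.
  pose proof (pqbr_pos p q N hp hq0 h1). pose proof sqrt2pi_pos.
  assert (E : exp (INR N * INR N * (- zeta * k ^ 2)) * exp ((0 ^ 2 - (x + k * INR N) ^ 2) / 2) =
              exp (INR N * INR N * (- (zeta + 1 / 2) * k ^ 2)) * exp (INR N * (- k * x)) * exp (- x ^ 2 / 2)).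
  { rewrite <- !exp_plus. f_equal. field. }
  transitivity ((exp (INR N * INR N * (- zeta * k ^ 2)) * exp ((0 ^ 2 - (x + k * INR N) ^ 2) / 2)) / pqbr p q N).
  field; lra. rewrite E. field. lra.
Qed.

Lemma coef_b p k q zeta x N : 0 < p -> q = p * exp (- 2 * k ^ 2) -> 0 < p * q -> p * q < 1 ->
  / sqrt (2 * PI) * Ecoef zeta p q N * GL (k * INR N) x =
  Ecoef (zeta - 1 / 2) p q N * exp (- x ^ 2 / 2).
Proof.
  intros hp hq h0 h1. assert (hq0 : 0 < q) by (subst q; apply Rmult_lt_0_compat; auto; apply exp_pos).
  rewrite !(Ecoef_formula p k q) by auto. unfold GL.
  rewrite <- !exp_INR_pow, mult_INR.
  pose proof (pqbr_pos p q N hp hq0 h1). pose proof sqrt2pi_pos.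
  assert (E : exp (INR N * INR N * (- zeta * k ^ 2)) * exp (((k * INR N) ^ 2 - x ^ 2) / 2) =
              exp (INR N * INR N * (- (zeta - 1 / 2) * k ^ 2)) * exp (- x ^ 2 / 2)).
  { rewrite <- !exp_plus. f_equal. field. }
  transitivity ((exp (INR N * INR N * (- zeta * k ^ 2)) * exp (((k * INR N) ^ 2 - x ^ 2) / 2)) / pqbr p q N).
  field; lra. rewrite E. field. lra.
Qed.

Lemma ind_a p k q zeta t x : 0 < p -> q = p * exp (- 2 * k ^ 2) -> 0 < p * q -> p * q < 1 ->
  forall N, CIInt (fun y => Cmul (RtoC (/ sqrt (2 * PI))) (Cmul (Cexp (- y ^ 2 / 2, x * y))
                    (Epartial zeta p q (Cmul t (Cexp (0, k * y))) N)))
                  (Cmul (Epartial (zeta + 1 / 2) p q (Cmul t (RtoC (exp (- k * x)))) N) (RtoC (exp (- x ^ 2 / 2)))).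
Proof.
  intros hp hq h0 h1 N. induction N.
  - eapply CIInt_eqL. eapply CIInt_ext. 2: apply CIInt_zero. intro y; simpl; csolve. simpl; csolve.
  - set (K := Cmul (RtoC (/ sqrt (2 * PI) * Ecoef zeta p q N)) (Cpow t N)).
    set (be := x + k * INR N).
    eapply CIInt_eqL. eapply CIInt_ext. 2: apply (CIInt_add _ _ _ _ IHN (CIInt_gauss K 0 be)).
    + intro y. cbv beta. rewrite Epartial_S, Cpow_mul, Cpow_Cexp0.
      replace (Cexp (- y ^ 2 / 2 + 0 * y, be * y)) with (Cmul (Cexp (- y ^ 2 / 2, x * y)) (Cexp (0, INR N * (k * y))))
        by (rewrite Cexp_mul; apply f_equal; apply Ceq; unfold be; simpl; ring).
      unfold K. generalize (Cexp (- y ^ 2 / 2, x * y)) (Cexp (0, INR N * (k * y))) (Cpow t N)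
        (Epartial zeta p q (Cmul t (Cexp (0, k * y))) N). intros. csolve.
    + rewrite Epartial_S, Cpow_mul, Cpow_RtoC.
      replace (0 * be) with 0 by ring. rewrite cos_0, sin_0.
      assert (T : Cmul K (GL 0 be * 1, GL 0 be * 0) =
                  Cmul (Cmul (RtoC (Ecoef (zeta + 1 / 2) p q N)) (Cmul (Cpow t N) (RtoC (exp (- k * x) ^ N)))) (RtoC (exp (- x ^ 2 / 2)))).
      { transitivity (Cmul (RtoC (/ sqrt (2 * PI) * Ecoef zeta p q N * GL 0 be)) (Cpow t N)).
        unfold K; csolve.
        unfold be; rewrite (coef_a p k q zeta x N) by auto. csolve. }
      rewrite T. csolve.
Qed.

Lemma ind_b p k q zeta t x : 0 < p -> q = p * exp (- 2 * k ^ 2) -> 0 < p * q -> p * q < 1 ->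
  forall N, CIInt (fun y => Cmul (RtoC (/ sqrt (2 * PI))) (Cmul (Cexp (- y ^ 2 / 2, x * y))
                    (Epartial zeta p q (Cmul t (RtoC (exp (k * y)))) N)))
                  (Cmul (Epartial (zeta - 1 / 2) p q (Cmul t (Cexp (0, k * x))) N) (RtoC (exp (- x ^ 2 / 2)))).
Proof.
  intros hp hq h0 h1 N. induction N.
  - eapply CIInt_eqL. eapply CIInt_ext. 2: apply CIInt_zero. intro y; simpl; csolve. simpl; csolve.
  - set (K := Cmul (RtoC (/ sqrt (2 * PI) * Ecoef zeta p q N)) (Cpow t N)).
    set (al := k * INR N).
    eapply CIInt_eqL. eapply CIInt_ext. 2: apply (CIInt_add _ _ _ _ IHN (CIInt_gauss K al x)).
    + intro y. cbv beta. rewrite Epartial_S, Cpow_mul, Cpow_RtoC, <- exp_INR_pow, (RtoC_exp (INR N * (k * y))).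
      replace (Cexp (- y ^ 2 / 2 + al * y, x * y)) with (Cmul (Cexp (- y ^ 2 / 2, x * y)) (Cexp (INR N * (k * y), 0)))
        by (rewrite Cexp_mul; apply f_equal; apply Ceq; unfold al; simpl; ring).
      unfold K. generalize (Cexp (- y ^ 2 / 2, x * y)) (Cexp (INR N * (k * y), 0)) (Cpow t N)
        (Epartial zeta p q (Cmul t (RtoC (exp (k * y)))) N). intros. csolve.
    + rewrite Epartial_S, Cpow_mul, Cpow_Cexp0.
      assert (G : (GL al x * cos (al * x), GL al x * sin (al * x)) = Cmul (RtoC (GL al x)) (Cexp (0, INR N * (k * x)))).
      { apply Ceq; unfold RtoC, Cexp, Cmul, al; simpl; rewrite exp_0;
        replace (k * INR N * x) with (INR N * (k * x)) by ring; ring. }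
      rewrite G.
      assert (T : Cmul K (Cmul (RtoC (GL al x)) (Cexp (0, INR N * (k * x)))) =
                  Cmul (Cmul (RtoC (Ecoef (zeta - 1 / 2) p q N)) (Cmul (Cpow t N) (Cexp (0, INR N * (k * x))))) (RtoC (exp (- x ^ 2 / 2)))).
      { transitivity (Cmul (RtoC (/ sqrt (2 * PI) * Ecoef zeta p q N * GL al x)) (Cmul (Cpow t N) (Cexp (0, INR N * (k * x))))).
        unfold K; csolve.
        unfold al; rewrite (coef_b p k q zeta x N) by auto. csolve. }
      rewrite T. csolve.
Qed.


Theorem mainTheorem6 (p k q zeta : R) (t : Cplx) (x : R)
  (hp : 0 < p) (hk : 0 < k) (hq : q = p * exp (- 2 * k ^ 2))
  (hpq0 : 0 < p * q) (hpq1 : p * q < 1) :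
  (* (a) *)
  (p * exp (- 2 * zeta * k ^ 2) < 1 ->
     Econv (zeta + 1/2) p q (Cmul t (RtoC (exp (- k * x)))) /\
     (forall y, Econv zeta p q (Cmul t (Cexp (0, k * y)))) /\
     improper_integral
       (fun y => Cmul (RtoC (/ sqrt (2 * PI)))
                   (Cmul (Cexp (- y ^ 2 / 2, x * y))
                         (Eexp zeta p q (Cmul t (Cexp (0, k * y))))))
       (Cmul (Eexp (zeta + 1/2) p q (Cmul t (RtoC (exp (- k * x)))))
             (RtoC (exp (- x ^ 2 / 2))))) /\
  (* (b) *)
  (p * exp (- (2 * zeta - 1) * k ^ 2) < 1 ->
     Econv (zeta - 1/2) p q (Cmul t (Cexp (0, k * x))) /\
     (forall y, Econv zeta p q (Cmul t (RtoC (exp (k * y))))) /\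
     improper_integral
       (fun y => Cmul (RtoC (/ sqrt (2 * PI)))
                   (Cmul (Cexp (- y ^ 2 / 2, x * y))
                         (Eexp zeta p q (Cmul t (RtoC (exp (k * y)))))))
       (Cmul (Eexp (zeta - 1/2) p q (Cmul t (Cexp (0, k * x))))
             (RtoC (exp (- x ^ 2 / 2))))).
Proof.
  assert (hs : 0 < sqrt p) by (apply sqrt_lt_R0; auto).
  assert (hsp : sqrt p * sqrt p = p) by (apply sqrt_sqrt; lra).
  assert (hA : forall nz, 0 <= nz -> 0 <= sqrt p * nz / (1 - p * q)).
  { intros nz Hnz. apply Rmult_le_pos. apply Rmult_le_pos; lra. left; apply Rinv_0_lt_compat; lra. }
  pose proof (nrm_pos t) as Ht.
  split.
  - intro ha.
    set (ra := sqrt p * exp (- zeta * k ^ 2)).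
    assert (hra : 0 < ra < 1).
    { assert (0 < ra) by (unfold ra; apply Rmult_lt_0_compat; auto; apply exp_pos).
      split; auto.
      assert (ra * ra < 1).
      { replace (ra * ra) with (p * exp (- 2 * zeta * k ^ 2)); auto.
        unfold ra. rewrite <- hsp at 1. replace (- 2 * zeta * k ^ 2) with (- zeta * k ^ 2 + - zeta * k ^ 2) by ring.
        rewrite exp_plus. ring. }
      nra. }
    assert (Hz0 : Econv (zeta + 1/2) p q (Cmul t (RtoC (exp (- k * x))))).
    { apply (Econv_gen p k q); auto. split.
      apply Rmult_lt_0_compat; auto; apply exp_pos.
      apply Rle_lt_trans with ra; [| lra]. unfold ra. apply Rmult_le_compat_l. lra.
      apply exp_le_exp_le. pose proof (pow2_ge_0 k). nra. }
    destruct (sum_major (fun n => Rabs (Ecoef zeta p q n) * (2 * nrm t) ^ n) (sqrt p * (2 * nrm t) / (1 - p * q)) ra)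
      as [Bh HB]; auto.
    { apply hA; lra. }
    { intro n. apply (Ecoef_major p k q zeta); auto. lra. }
    destruct (Ls_cv (zeta + 1/2) p q _ (exp (- x ^ 2 / 2)) Hz0) as [L1 L2].
    destruct (assembly p q zeta x (fun y => Cmul t (Cexp (0, k * y)))
                (fun n => Rabs (Ecoef zeta p q n) * (2 * nrm t) ^ n) Bh (fun _ => 1) 6
                (fun N => Cmul (Epartial (zeta + 1/2) p q (Cmul t (RtoC (exp (- k * x)))) N) (RtoC (exp (- x ^ 2 / 2))))
                (Cmul (Eexp (zeta + 1/2) p q (Cmul t (RtoC (exp (- k * x))))) (RtoC (exp (- x ^ 2 / 2)))) HB) as [HE HC].
    + intro n. apply Rmult_le_pos. apply Rabs_pos. apply pow_le; lra.
    + intro; lra.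
    + intros y n. rewrite Rmult_1_l. apply Rmult_le_compat_l. apply Rabs_pos.
      apply pow_incr. split. apply nrm_pos.
      eapply Rle_trans. apply nrm_mul. eapply Rle_trans. apply Rmult_le_compat_l. lra. apply nrm_Cexp.
      rewrite exp_0. lra.
    + intro y. pose proof (gauss_weight (1/2) y ltac:(lra)).
      replace (- (1 / 2) * y ^ 2) with (- y ^ 2 / 2) in H by field.
      replace (1 + / (1 / 2)) with 3 in H by field. lra.
    + apply ind_a; auto.
    + exact L1.
    + exact L2.
    + split; auto. split; auto. apply CIInt_improper. exact HC.
  - intro hb.
    set (m := sqrt p * exp (- zeta * k ^ 2) * exp (k ^ 2 / 2)).
    assert (hm : 0 < m < 1).
    { assert (0 < m) by (unfold m; apply Rmult_lt_0_compat; [apply Rmult_lt_0_compat; auto|]; apply exp_pos).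
      split; auto.
      assert (m * m < 1).
      { replace (m * m) with (p * exp (- (2 * zeta - 1) * k ^ 2)); auto.
        unfold m. rewrite <- hsp at 1.
        replace (- (2 * zeta - 1) * k ^ 2) with ((- zeta * k ^ 2 + k ^ 2 / 2) + (- zeta * k ^ 2 + k ^ 2 / 2)) by field.
        rewrite !exp_plus. ring. }
      nra. }
    assert (Hz0 : Econv (zeta - 1/2) p q (Cmul t (Cexp (0, k * x)))).
    { apply (Econv_gen p k q); auto.
      replace (sqrt p * exp (- (zeta - 1 / 2) * k ^ 2)) with m; auto.
      unfold m. rewrite Rmult_assoc, <- exp_plus. f_equal. f_equal. field. }
    set (r := (1 + m) / (2 * m)).
    assert (hr : 1 < r) by (unfold r; apply Rmult_lt_reg_r with (2 * m); [lra|]; unfold Rdiv; rewrite Rmult_assoc, Rinv_l; lra).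
    assert (hlnr : 0 < ln r) by (rewrite <- ln_1; apply ln_increasing; lra).
    set (lam := 1 / 2 + ln r / k ^ 2).
    assert (hk2 : 0 < k ^ 2) by (apply pow_lt; auto).
    assert (hlam : 1 / 2 < lam) by (unfold lam; assert (0 < ln r / k ^ 2) by (apply Rdiv_lt_0_compat; auto); lra).
    assert (Elam : exp (lam * k ^ 2) = exp (k ^ 2 / 2) * r).
    { unfold lam. replace ((1 / 2 + ln r / k ^ 2) * k ^ 2) with (k ^ 2 / 2 + ln r) by (field; lra).
      rewrite exp_plus, exp_ln; lra. }
    set (rb := sqrt p * exp (- zeta * k ^ 2) * exp (lam * k ^ 2)).
    assert (hrb : rb = (1 + m) / 2).
    { unfold rb. rewrite Elam. rewrite <- Rmult_assoc. fold m. unfold r. field. lra. }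
    set (delta := 1 / 2 - / (4 * lam)).
    assert (hdelta : 0 < delta).
    { unfold delta. assert (/ (4 * lam) < / 2) by (apply Rinv_lt_contravar; lra). lra. }
    destruct (sum_major (fun n => Rabs (Ecoef zeta p q n) * nrm t ^ n * exp (lam * k ^ 2) ^ (n * n))
                (sqrt p * nrm t / (1 - p * q)) rb) as [Bh HB]; auto.
    { rewrite hrb; lra. }
    { intro n. destruct (Ecoef_major p k q zeta (nrm t) n) as [E1 E2]; auto.
      pose proof (pow_lt (exp (lam * k ^ 2)) (n * n) (exp_pos _)).
      split. apply Rmult_le_pos; lra.
      unfold rb. rewrite (Rpow_mult_distr (sqrt p * exp (- zeta * k ^ 2))), <- Rmult_assoc.
      apply Rmult_le_compat_r; lra. }
    destruct (Ls_cv (zeta - 1/2) p q _ (exp (- x ^ 2 / 2)) Hz0) as [L1 L2].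
    destruct (assembly p q zeta x (fun y => Cmul t (RtoC (exp (k * y))))
                (fun n => Rabs (Ecoef zeta p q n) * nrm t ^ n * exp (lam * k ^ 2) ^ (n * n)) Bh
                (fun y => exp (y ^ 2 / (4 * lam))) (2 * (1 + / delta))
                (fun N => Cmul (Epartial (zeta - 1/2) p q (Cmul t (Cexp (0, k * x))) N) (RtoC (exp (- x ^ 2 / 2))))
                (Cmul (Eexp (zeta - 1/2) p q (Cmul t (Cexp (0, k * x)))) (RtoC (exp (- x ^ 2 / 2)))) HB) as [HE HC].
    + intro n. apply Rmult_le_pos. apply Rmult_le_pos. apply Rabs_pos. apply pow_le; lra.
      left; apply pow_lt, exp_pos.
    + intro; left; apply exp_pos.
    + intros y n. cbv beta.
      assert (N1 : nrm (Cmul t (RtoC (exp (k * y)))) ^ n <= nrm t ^ n * exp (k * y) ^ n).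
      { rewrite <- Rpow_mult_distr. apply pow_incr. split. apply nrm_pos.
        eapply Rle_trans. apply nrm_mul_RtoC. rewrite Rabs_right. lra. left; apply exp_pos. }
      assert (N2 : exp (k * y) ^ n <= exp (y ^ 2 / (4 * lam)) * exp (lam * k ^ 2) ^ (n * n)).
      { rewrite <- !exp_INR_pow, <- exp_plus, mult_INR. apply exp_le_exp_le.
        set (u := INR n).
        assert (E : y ^ 2 / (4 * lam) + u * u * (lam * k ^ 2) - u * (k * y) = (y - 2 * lam * u * k) ^ 2 / (4 * lam))
          by (field; lra).
        assert (0 <= (y - 2 * lam * u * k) ^ 2 / (4 * lam)).
        { apply Rmult_le_pos. apply pow2_ge_0. left; apply Rinv_0_lt_compat; lra. }
        lra. }
      pose proof (Rabs_pos (Ecoef zeta p q n)). pose proof (pow_le (nrm t) n Ht).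
      apply Rle_trans with (Rabs (Ecoef zeta p q n) * (nrm t ^ n * exp (k * y) ^ n)).
      apply Rmult_le_compat_l; auto.
      replace (exp (y ^ 2 / (4 * lam)) * (Rabs (Ecoef zeta p q n) * nrm t ^ n * exp (lam * k ^ 2) ^ (n * n)))
        with (Rabs (Ecoef zeta p q n) * (nrm t ^ n * (exp (y ^ 2 / (4 * lam)) * exp (lam * k ^ 2) ^ (n * n)))) by ring.
      apply Rmult_le_compat_l; auto. apply Rmult_le_compat_l; auto.
    + intro y. cbv beta. pose proof (gauss_weight delta y hdelta).
      replace (exp (- y ^ 2 / 2) * exp (y ^ 2 / (4 * lam))) with (exp (- delta * y ^ 2)).
      2:{ rewrite <- exp_plus. f_equal. unfold delta. field. lra. }
      replace (2 * exp (- y ^ 2 / 2) * exp (y ^ 2 / (4 * lam))) with (2 * (exp (- y ^ 2 / 2) * exp (y ^ 2 / (4 * lam)))) by ring.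
      replace (exp (- y ^ 2 / 2) * exp (y ^ 2 / (4 * lam))) with (exp (- delta * y ^ 2)).
      2:{ rewrite <- exp_plus. f_equal. unfold delta. field. lra. }
      lra.
    + apply ind_b; auto.
    + exact L1.
    + exact L2.
    + split; auto. split; auto. apply CIInt_improper. exact HC.
Qed.
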